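(* For $i=0,1$ let $\mathcal L_i$ be a cabled linkage in $\mathbb R^n$ which is (strongly) functional for $f_i\colon(\mathbb R^n)^{k_i}\to(\mathbb R^n)^{m_i}$ with restricted domain $U_i$. Let $\mathcal L$ be the disjoint union of $\mathcal L_0$ and $\mathcal L_1$ (with input and output vertices those of $\mathcal L_0$ followed by those of $\mathcal L_1$). Then: (1) $\mathcal L$ is (strongly) functional for $f_0\times f_1\colon(\mathbb R^n)^{k_0}\times(\mathbb R^n)^{k_1}\to(\mathbb R^n)^{m_0}\times(\mathbb R^n)^{m_1}$ with restricted domain $U_0\times U_1$; (2) if $k_0=k_1$, and $\mathcal L'$ is obtained from $\mathcal L$ by identifying the $j$-th input vertex of $\mathcal L_0$ with the $j$-th input vertex of $\mathcal L_1$ for each $j$, then $\mathcal L'$ is (strongly) functional for $(f_0,f_1)\colon(\mathbb R^n)^{k_0}\to(\mathbb R^n)^{m_0}\times(\mathbb R^n)^{m_1}$ with restricted domain $U_0\cap U_1$.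
   Context: A cabled linkage in $\mathbb R^n$ is $\mathcal L=(L,\ell,V,\mu,F)$: $L$ a finite one-dimensional simplicial complex (vertex set $\mathcal V(L)$, edge set $\mathcal E(L)$), $\ell\colon\mathcal E(L)\to(0,\infty)$, $V\subset\mathcal V(L)$ fixed vertices, $\mu\colon V\to\mathbb R^n$, $F\subset\mathcal E(L)$ flexible edges. $\mathcal C(\mathcal L)=\{\varphi\colon\mathcal V(L)\to\mathbb R^n\mid\varphi(v)=\mu(v)\ (v\in V),\ |\varphi(v)-\varphi(w)|\le\ell(vw)\ (vw\in F),\ |\varphi(v)-\varphi(w)|=\ell(vw)\ (vw\in\mathcal E(L)\setminus F)\}$. $\mathcal L$ is quasifunctional for $f\colon(\mathbb R^n)^k\to(\mathbb R^n)^m$ if there are vertices $w_1,\dots,w_k$ (input) and $v_1,\dots,v_m$ (output), repetitions allowed, with input map $q(\varphi)=(\varphi(w_1),\dots,\varphi(w_k))$, output map $p(\varphi)=(\varphi(v_1),\dots,\varphi(v_m))$ and $p=f\circ q$; its domain is $q(\mathcal C(\mathcal L))$. It is functional with restricted domain $U\subset q(\mathcal C(\mathcal L))$ if there are a finite set $E$ and an analytic isomorphism $\sigma\colon U\times E\to q^{-1}(U)$ with $q(\sigma(u,c))=u$; strongly functional if $q\colon\mathcal C(\mathcal L)\to q(\mathcal C(\mathcal L))$ is an analytic isomorphism, and strongly functional with restricted domain $U$ if also $U\subset q(\mathcal C(\mathcal L))$. An analytic isomorphism is a homeomorphism $h$ with $h,h^{-1}$ restrictions of analytic maps. *)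

(* Defs.v *)
From HB Require Import structures.
From mathcomp Require Import all_boot all_order all_algebra.
From mathcomp Require Import all_classical all_reals all_analysis.

Set Implicit Arguments.
Unset Strict Implicit.
Unset Printing Implicit Defensive.

Import Order.TTheory GRing.Theory Num.Theory.
Import numFieldNormedType.Exports.
Local Open Scope classical_set_scope.
Local Open Scope ring_scope.

Section Analytic.
Variable R : realType.

Definition monom (I : finType) (alpha : I -> nat) (x : I -> R) : R :=
  \prod_i x i ^+ alpha i.

Definition hom_part (I : finType) (c : (I -> nat) -> R) (a x : I -> R) (d : nat) : R :=
  \sum_(alpha : {ffun I -> 'I_d.+1} | (\sum_i (alpha i : nat) == d)%N)
     c (fun i => (alpha i : nat)) * monom (fun i => (alpha i : nat)) (fun i => x i - a i).

Definition abs_hom_part (I : finType) (c : (I -> nat) -> R) (a x : I -> R) (d : nat) : R :=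
  \sum_(alpha : {ffun I -> 'I_d.+1} | (\sum_i (alpha i : nat) == d)%N)
     `| c (fun i => (alpha i : nat)) * monom (fun i => (alpha i : nat)) (fun i => x i - a i) |.

Definition analytic_at (I : finType) (f : (I -> R) -> R) (a : I -> R) : Prop :=
  exists r : R, 0 < r /\
  exists c : (I -> nat) -> R,
    forall x : I -> R, (forall i, `|x i - a i| < r) ->
      cvgn (series (abs_hom_part c a x)) /\
      f x = limn (series (hom_part c a x)).

Definition open_set (I : finType) (W : set (I -> R)) : Prop :=
  forall a, W a -> exists r : R, 0 < r /\
    forall x, (forall i, `|x i - a i| < r) -> W x.

Definition analytic_on (I J : finType) (W : set (I -> R)) (F : (I -> R) -> (J -> R)) : Prop :=
  open_set W /\ forall a, W a -> forall j, analytic_at (fun x => F x j) a.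

Definition restr_analytic (I J : finType) (A : set (I -> R)) (h : (I -> R) -> (J -> R)) : Prop :=
  exists (W : set (I -> R)) (F : (I -> R) -> (J -> R)),
    A `<=` W /\ analytic_on W F /\ forall x, A x -> F x = h x.

Definition continuous_on (I J : finType) (A : set (I -> R)) (h : (I -> R) -> (J -> R)) : Prop :=
  forall a, A a -> forall eps : R, 0 < eps -> exists delta : R, 0 < delta /\
    forall x, A x -> (forall i, `|x i - a i| < delta) -> forall j, `|h x j - h a j| < eps.

Definition analytic_iso (I J : finType) (A : set (I -> R)) (B : set (J -> R))
    (h : (I -> R) -> (J -> R)) : Prop :=
  exists g : (J -> R) -> (I -> R),
    (forall x, A x -> B (h x)) /\ (forall y, B y -> A (g y)) /\
    (forall x, A x -> g (h x) = x) /\ (forall y, B y -> h (g y) = y) /\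
    continuous_on A h /\ continuous_on B g /\
    restr_analytic A h /\ restr_analytic B g.

End Analytic.

(* Points of R^n are functions 'I_n -> R; configurations phi : V(L) -> R^n  *)
(* are stored uncurried as functions V(L) * 'I_n -> R, so that the          *)
(* configuration space is a subset of a coordinate space R^(V(L) x n).      *)
Record lk_linkage (R : realType) (n : nat) := Linkage {
  vert : finType;
  edge : finType;
  src : edge -> vert;
  dst : edge -> vert;
  len : edge -> R;
  flex : pred edge;
  pin : finType;                     (* indexes the fixed vertices V *)
  pinv : pin -> vert;                (* V = image of pinv *)
  pinpos : pin -> 'I_n -> R          (* mu (pinv p) = pinpos p *)
}.

Arguments vert {R n}.
Arguments edge {R n}.
Arguments src {R n}.
Arguments dst {R n}.
Arguments len {R n}.
Arguments flex {R n}.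
Arguments pin {R n}.
Arguments pinv {R n}.
Arguments pinpos {R n}.

(* the data form a cabled linkage: L is a one-dimensional simplicial complex
   (edges join two distinct vertices, distinct edges have distinct vertex
   pairs), lengths are positive, and V ⊂ V(L) with mu : V -> R^n (pinv is
   injective). *)
Definition cabled_linkage (R : realType) (n : nat) (L : lk_linkage R n) : Prop :=
  (forall e, src L e != dst L e) /\
  (forall e e', [set src L e; dst L e]%SET = [set src L e'; dst L e']%SET -> e = e') /\
  (forall e, 0 < len L e) /\
  injective (pinv L).

Definition edist (R : realType) (n : nat) (x y : 'I_n -> R) : R :=
  Num.sqrt (\sum_i (x i - y i) ^+ 2).

Definition vpos (R : realType) (n : nat) (L : lk_linkage R n)
   (phi : vert L * 'I_n -> R) (v : vert L) : 'I_n -> R := fun j => phi (v, j).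

Definition config (R : realType) (n : nat) (L : lk_linkage R n) : set (vert L * 'I_n -> R) :=
  fun phi =>
    (forall p, vpos phi (pinv L p) = pinpos L p) /\
    (forall e, if flex L e
               then edist (vpos phi (src L e)) (vpos phi (dst L e)) <= len L e
               else edist (vpos phi (src L e)) (vpos phi (dst L e)) == len L e).

Arguments config {R n} L _.

Notation tup R k n := ('I_k * 'I_n -> R).

Definition vmap (R : realType) (n k : nat) (L : lk_linkage R n) (w : 'I_k -> vert L)
   (phi : vert L * 'I_n -> R) : tup R k n :=
  fun p => phi (w p.1, p.2).

Definition quasifunctional (R : realType) (n k m : nat) (L : lk_linkage R n)
   (w : 'I_k -> vert L) (v : 'I_m -> vert L) (f : tup R k n -> tup R m n) : Prop :=
  forall phi, config L phi -> vmap v phi = f (vmap w phi).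

Definition qdomain (R : realType) (n k : nat) (L : lk_linkage R n) (w : 'I_k -> vert L)
  : set (tup R k n) := vmap w @` config L.

(* U x E where the finite set E is realised as {0,..,e-1} ⊂ R, placed in the
   extra coordinate None *)
Definition prodE (R : realType) (n k : nat) (U : set (tup R k n)) (e : nat)
  : set (option ('I_k * 'I_n) -> R) :=
  fun z => U (fun p => z (Some p)) /\ exists c : 'I_e, z None = (c%:R : R).

Definition lk_functional (R : realType) (n k m : nat) (L : lk_linkage R n)
   (w : 'I_k -> vert L) (v : 'I_m -> vert L) (f : tup R k n -> tup R m n)
   (U : set (tup R k n)) : Prop :=
  quasifunctional w v f /\ U `<=` qdomain w /\
  exists (e : nat) (sigma : (option ('I_k * 'I_n) -> R) -> (vert L * 'I_n -> R)),
    analytic_iso (prodE U e) (config L `&` (vmap w @^-1` U)) sigma /\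
    (forall z, prodE U e z -> vmap w (sigma z) = (fun p => z (Some p))).

Definition lk_strongly_functional (R : realType) (n k m : nat) (L : lk_linkage R n)
   (w : 'I_k -> vert L) (v : 'I_m -> vert L) (f : tup R k n -> tup R m n)
   (U : set (tup R k n)) : Prop :=
  quasifunctional w v f /\ U `<=` qdomain w /\
  analytic_iso (config L) (qdomain w) (vmap w).

Definition sum_map (A B C : Type) (f : A -> C) (g : B -> C) (x : A + B) : C :=
  match x with inl a => f a | inr b => g b end.

Definition disj_union (R : realType) (n : nat) (L0 L1 : lk_linkage R n) : lk_linkage R n :=
  @Linkage R n ((vert L0 + vert L1)%type) ((edge L0 + edge L1)%type)
    (sum_map (fun e => inl (src L0 e)) (fun e => inr (src L1 e)))
    (sum_map (fun e => inl (dst L0 e)) (fun e => inr (dst L1 e)))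
    (sum_map (len L0) (len L1))
    (sum_map (flex L0) (flex L1))
    ((pin L0 + pin L1)%type)
    (sum_map (fun p => inl (pinv L0 p)) (fun p => inr (pinv L1 p)))
    (sum_map (pinpos L0) (pinpos L1)).

Definition lk_cat (R : realType) (n k0 k1 : nat) (L0 L1 : lk_linkage R n)
   (w0 : 'I_k0 -> vert L0) (w1 : 'I_k1 -> vert L1) : 'I_(k0 + k1) -> vert (disj_union L0 L1) :=
  fun i => match fintype.split i with inl j => inl (w0 j) | inr j => inr (w1 j) end.

Definition tup_l (R : realType) (n k0 k1 : nat) (u : tup R (k0 + k1) n) : tup R k0 n :=
  fun p => u (lshift k1 p.1, p.2).
Definition tup_r (R : realType) (n k0 k1 : nat) (u : tup R (k0 + k1) n) : tup R k1 n :=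
  fun p => u (rshift k0 p.1, p.2).
Definition tup_cat (R : realType) (n m0 m1 : nat) (a : tup R m0 n) (b : tup R m1 n)
  : tup R (m0 + m1) n :=
  fun p => match fintype.split p.1 with inl j => a (j, p.2) | inr j => b (j, p.2) end.

Definition lk_fprod (R : realType) (n k0 k1 m0 m1 : nat)
   (f0 : tup R k0 n -> tup R m0 n) (f1 : tup R k1 n -> tup R m1 n)
   : tup R (k0 + k1) n -> tup R (m0 + m1) n :=
  fun u => tup_cat (f0 (tup_l u)) (f1 (tup_r u)).

Definition lk_dprod (R : realType) (n k0 k1 : nat) (U0 : set (tup R k0 n)) (U1 : set (tup R k1 n))
  : set (tup R (k0 + k1) n) :=
  fun u => U0 (tup_l u) /\ U1 (tup_r u).

Definition lk_fpair (R : realType) (n k m0 m1 : nat)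
   (f0 : tup R k n -> tup R m0 n) (f1 : tup R k n -> tup R m1 n)
   : tup R k n -> tup R (m0 + m1) n :=
  fun u => tup_cat (f0 u) (f1 u).

(* Identification of vertices: quotient of the vertex set by the           *)
(* equivalence relation generated by  w0 j ~ w1 j  (j < k).                 *)
Section Glue.
Variables (R : realType) (n k : nat) (L0 L1 : lk_linkage R n).
Variables (w0 : 'I_k -> vert L0) (w1 : 'I_k -> vert L1).

Local Notation V := (vert (disj_union L0 L1)).

Definition glue_rel : rel V := fun x y =>
  [exists j, ((x == inl (w0 j)) && (y == inr (w1 j))) ||
             ((y == inl (w0 j)) && (x == inr (w1 j)))].

Definition glue_class (x : V) : {set V} := [set y | connect glue_rel x y].

Definition glue_vert : finType := {X : {set V} | [exists x, X == glue_class x]}.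

Definition glue_proj (x : V) : glue_vert :=
  exist _ (glue_class x) (introT existsP (ex_intro (fun y => glue_class x == glue_class y) x (eqxx _))).

Definition glue_linkage : lk_linkage R n :=
  let L := disj_union L0 L1 in
  @Linkage R n glue_vert (edge L)
    (fun e => glue_proj (src L e)) (fun e => glue_proj (dst L e))
    (len L) (flex L) (pin L) (fun p => glue_proj (pinv L p)) (pinpos L).

End Glue.

(* Main.v *)
Require Import Defs.
From HB Require Import structures.
From mathcomp Require Import all_boot all_order all_algebra.
From mathcomp Require Import all_classical all_reals all_analysis.
From mathcomp Require Import zify.
Set Implicit Arguments.
Unset Strict Implicit.
Unset Printing Implicit Defensive.
Import Order.TTheory GRing.Theory Num.Theory.
Import numFieldNormedType.Exports.
Local Open Scope classical_set_scope.
Local Open Scope ring_scope.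

Section AnaLemmas.
Variable R : realType.

Lemma analytic_at_local (I : finType) (f g : (I -> R) -> R) (a : I -> R) (r : R) :
  0 < r -> (forall x, (forall i, `|x i - a i| < r) -> f x = g x) ->
  analytic_at f a -> analytic_at g a.
Proof.
move=> r0 fg [r' [r'0 [c Hc]]].
exists (Num.min r r'); split; first by rewrite lt_min r0 r'0.
exists c => x Hx.
have Hr : forall i, `|x i - a i| < r by move=> i; have := Hx i; rewrite lt_min => /andP[].
have Hr' : forall i, `|x i - a i| < r' by move=> i; have := Hx i; rewrite lt_min => /andP[].
by have [h1 h2] := Hc x Hr'; split => //; rewrite -fg.
Qed.

Lemma big_exch_some (T : Type) (idx : T) (op : Monoid.com_law idx)
   (I I0 : finType) (s : I0 -> option I) (F : I0 -> I -> T) :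
  \big[op/idx]_(j : I) \big[op/idx]_(i0 : I0 | s i0 == Some j) F i0 j =
  \big[op/idx]_(i0 : I0) (if s i0 is Some j then F i0 j else idx).
Proof.
rewrite (eq_bigr (fun j => \big[op/idx]_(i0 : I0) (if s i0 == Some j then F i0 j else idx))); last first.
  by move=> j _; rewrite big_mkcond.
rewrite exchange_big; apply: eq_bigr => i0 _.
case: (s i0) => [j0|].
  rewrite (bigD1 j0) //= eqxx big1 ?Monoid.mulm1 // => j /negbTE hj.
  by case: eqP => // -[] /esym/eqP; rewrite hj.
by rewrite big1.
Qed.

Section Subst.
Variables (I I0 : finType) (s : I0 -> option I) (kap : I0 -> R).

Definition substv (x : I -> R) : I0 -> R :=
  fun i0 => if s i0 is Some j then x j else kap i0.
Definition zN (al : I0 -> nat) : bool :=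
  [forall i0, (s i0 == None) ==> (al i0 == 0%N)].
Definition pushn (al : I0 -> nat) (j : I) : nat :=
  (\sum_(i0 | s i0 == Some j) al i0)%N.
Definition csum (c : (I0 -> nat) -> R) (d : nat) (be : I -> nat) : R :=
  \sum_(al : {ffun I0 -> 'I_d.+1} |
     [forall j, pushn (fun i => nat_of_ord (al i)) j == be j] &&
     zN (fun i => nat_of_ord (al i))) c (fun i => nat_of_ord (al i)).
Definition csub (c : (I0 -> nat) -> R) (be : I -> nat) : R :=
  csum c (\sum_j be j)%N be.

Lemma sum_push al : zN al -> (\sum_j pushn al j = \sum_i0 al i0)%N.
Proof.
move=> z; rewrite /pushn (big_exch_some addn s (fun i0 _ => al i0)).
apply: eq_bigr => i0 _; case E: (s i0) => [j|] //.
by move/forallP: z => /(_ i0); rewrite E eqxx /= => /eqP ->.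
Qed.

Lemma sum_sub_le (f : I0 -> nat) (P : pred I0) :
  (\sum_(i0 | P i0) f i0 <= \sum_i0 f i0)%N.
Proof. by rewrite big_mkcond /=; apply: leq_sum => i _; case: (P i). Qed.

Lemma push_le al j : (pushn al j <= \sum_i0 al i0)%N.
Proof. exact: sum_sub_le. Qed.

Lemma monom_push (x a : I -> R) al : zN al ->
  monom (pushn al) (fun j => x j - a j) =
  monom al (fun i0 => substv x i0 - substv a i0).
Proof.
move=> z; rewrite /monom /pushn.
under eq_bigr do rewrite -prodrXr.
rewrite (eq_bigr (fun j => \prod_(i0 | s i0 == Some j)
   (substv x i0 - substv a i0) ^+ al i0)); last first.
  by move=> j _; apply: eq_bigr => i0 /eqP E; rewrite /substv E.
rewrite (big_exch_some _ s (fun i0 _ => (substv x i0 - substv a i0) ^+ al i0)).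
apply: eq_bigr => i0 _; case E: (s i0) => [j|] //.
by move/forallP: z => /(_ i0); rewrite E eqxx /= => /eqP ->; rewrite expr0.
Qed.

Lemma monom_nz (x a : I -> R) al : ~~ zN al ->
  monom al (fun i0 => substv x i0 - substv a i0) = 0.
Proof.
rewrite /zN negb_forall => /existsP[i0]; rewrite negb_imply => /andP[/eqP E nz].
rewrite /monom (bigD1 i0) //= /substv E subrr expr0n.
by rewrite (negbTE nz) mul0r.
Qed.

Lemma rearr (G : (I0 -> nat) -> (I -> nat) -> R) d :
  \sum_(be : {ffun I -> 'I_d.+1} | (\sum_j nat_of_ord (be j) == d)%N)
    \sum_(al : {ffun I0 -> 'I_d.+1} |
       [forall j, pushn (fun i => nat_of_ord (al i)) j == be j] &&
       zN (fun i => nat_of_ord (al i)))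
      G (fun i => nat_of_ord (al i)) (fun j => nat_of_ord (be j))
  = \sum_(al : {ffun I0 -> 'I_d.+1} |
       (\sum_i nat_of_ord (al i) == d)%N && zN (fun i => nat_of_ord (al i)))
      G (fun i => nat_of_ord (al i)) (pushn (fun i => nat_of_ord (al i))).
Proof.
pose pushf (al : {ffun I0 -> 'I_d.+1}) : {ffun I -> 'I_d.+1} :=
  [ffun j => inord (pushn (fun i => nat_of_ord (al i)) j)].
have pushfE (al : {ffun I0 -> 'I_d.+1}) (j : I) : (\sum_i nat_of_ord (al i) == d)%N ->
    nat_of_ord (pushf al j) = pushn (fun i => nat_of_ord (al i)) j.
  move=> /eqP Hs; rewrite ffunE inordK // ltnS; apply: leq_trans (push_le _ _) _; by rewrite Hs.
rewrite [RHS](partition_big pushf (fun be => \sum_j nat_of_ord (be j) == d)%N).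
  apply: eq_bigr => be /eqP Hbe; apply: eq_big => al.
    apply/idP/idP.
      move=> /andP[Hp z].
      have Hq : forall j, pushn (fun i => nat_of_ord (al i)) j = be j.
        by move=> j; move/forallP: Hp => /(_ j) /eqP.
      have Hs : (\sum_i nat_of_ord (al i) = d)%N.
        rewrite -(sum_push z) -[in RHS]Hbe; exact: eq_bigr.
      rewrite Hs eqxx z /=; apply/eqP/ffunP => j; apply: val_inj.
      by rewrite /= pushfE ?Hs // Hq.
    move=> /andP[/andP[Hs z] /eqP Hb]; rewrite z andbT.
    by apply/forallP => j; rewrite -Hb pushfE.
  move=> /andP[Hp z]; congr G; apply: funext => j.
  by move/forallP: Hp => /(_ j) /eqP.
move=> al /andP[Hs z]; rewrite (eq_bigr (fun j => pushn (fun i => nat_of_ord (al i)) j)).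
  by rewrite sum_push.
by move=> j _; rewrite pushfE.
Qed.

Lemma hom_part_subst c a x d :
  hom_part (csub c) a x d = hom_part c (substv a) (substv x) d.
Proof.
rewrite /hom_part.
transitivity (\sum_(be : {ffun I -> 'I_d.+1} | (\sum_j nat_of_ord (be j) == d)%N)
    \sum_(al : {ffun I0 -> 'I_d.+1} |
       [forall j, pushn (fun i => nat_of_ord (al i)) j == be j] &&
       zN (fun i => nat_of_ord (al i)))
      c (fun i => nat_of_ord (al i)) *
      monom (fun j => nat_of_ord (be j)) (fun i => x i - a i)).
  apply: eq_bigr => be /eqP Hbe; rewrite /csub Hbe /csum mulr_suml.
  by [].
rewrite (rearr (fun al be => c al * monom be (fun i => x i - a i))).
rewrite [RHS](bigID (fun al : {ffun I0 -> 'I_d.+1} => zN (fun i => nat_of_ord (al i)))) /=.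
rewrite [X in _ = _ + X]big1 ?addr0; last first.
  by move=> al /andP[_ nz]; rewrite monom_nz // mulr0.
by apply: eq_bigr => al /andP[_ z]; rewrite monom_push.
Qed.

Lemma abs_hom_part_subst c a x d :
  abs_hom_part (csub c) a x d <= abs_hom_part c (substv a) (substv x) d.
Proof.
rewrite /abs_hom_part.
apply: (le_trans (y := \sum_(be : {ffun I -> 'I_d.+1} | (\sum_j nat_of_ord (be j) == d)%N)
    \sum_(al : {ffun I0 -> 'I_d.+1} |
       [forall j, pushn (fun i => nat_of_ord (al i)) j == be j] &&
       zN (fun i => nat_of_ord (al i)))
      `|c (fun i => nat_of_ord (al i))| *
      `|monom (fun j => nat_of_ord (be j)) (fun i => x i - a i)|)).
  apply: ler_sum => be /eqP Hbe; rewrite /csub Hbe /csum normrM -mulr_suml.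
  by apply: ler_wpM2r => //; apply: ler_norm_sum.
rewrite (rearr (fun al be => `|c al| * `|monom be (fun i => x i - a i)|)).
rewrite [X in _ <= X](bigID (fun al : {ffun I0 -> 'I_d.+1} => zN (fun i => nat_of_ord (al i)))) /=.
rewrite [X in _ <= _ + X]big1 ?addr0; last first.
  by move=> al /andP[_ nz]; rewrite monom_nz // mulr0 normr0.
rewrite le_eqVlt; apply/orP; left; apply/eqP; apply: eq_bigr => al /andP[_ z]; by rewrite monom_push // normrM.
Qed.

Lemma analytic_subst (F : (I0 -> R) -> R) (a : I -> R) :
  analytic_at F (substv a) -> analytic_at (fun x => F (substv x)) a.
Proof.
move=> [r [r0 [c Hc]]]; exists r; split => //; exists (csub c) => x Hx.
have Hx' : forall i0, `|substv x i0 - substv a i0| < r.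
  by move=> i0; rewrite /substv; case: (s i0) => [j|]; [apply: Hx | rewrite subrr normr0].
have [cv Heq] := Hc _ Hx'; split.
  apply: (series_le_cvg _ _ _ cv).
  - by move=> d; apply: sumr_ge0 => ? _.
  - by move=> d; apply: sumr_ge0 => ? _.
  - by move=> d; exact: abs_hom_part_subst.
rewrite Heq (_ : hom_part (csub c) a x = hom_part c (substv a) (substv x)) //.
by apply: funext => d; exact: hom_part_subst.
Qed.

End Subst.

Lemma cvg_lin_seq (f g : nat -> R) (k1 k2 : R) : cvgn f -> cvgn g ->
  (fun n => k1 * f n + k2 * g n) @ \oo --> k1 * limn f + k2 * limn g.
Proof. by move=> hf hg; apply: cvgD; apply: cvgMl_tmp. Qed.

Lemma is_cvg_lin_seq (f g : nat -> R) (k1 k2 : R) : cvgn f -> cvgn g ->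
  cvgn (fun n => k1 * f n + k2 * g n).
Proof. by move=> hf hg; apply/cvg_ex; eexists; exact: cvg_lin_seq. Qed.

Lemma lim_lin_seq (f g : nat -> R) (k1 k2 : R) : cvgn f -> cvgn g ->
  limn (fun n => k1 * f n + k2 * g n) = k1 * limn f + k2 * limn g.
Proof. by move=> hf hg; apply: cvg_lim => //; exact: cvg_lin_seq. Qed.

Lemma seriesE' (u : nat -> R) N : series u N = \sum_(0 <= k < N) u k.
Proof. by rewrite seriesEnat. Qed.

Lemma series_lin (A B : nat -> R) (k1 k2 : R) :
  series (fun d => k1 * A d + k2 * B d) = fun N => k1 * series A N + k2 * series B N.
Proof.
by apply: funext => N; rewrite !seriesE' big_split /= -!mulr_sumr.
Qed.

Lemma analytic_lin (I : finType) (f g : (I -> R) -> R) (a : I -> R) (k1 k2 : R) :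
  analytic_at f a -> analytic_at g a ->
  analytic_at (fun x => k1 * f x + k2 * g x) a.
Proof.
move=> [r1 [r10 [c1 H1]]] [r2 [r20 [c2 H2]]].
exists (Num.min r1 r2); split; first by rewrite lt_min r10 r20.
exists (fun al => k1 * c1 al + k2 * c2 al) => x Hx.
have Hx1 : forall i, `|x i - a i| < r1.
  by move=> i; have := Hx i; rewrite lt_min => /andP[].
have Hx2 : forall i, `|x i - a i| < r2.
  by move=> i; have := Hx i; rewrite lt_min => /andP[].
have [cv1 e1] := H1 x Hx1; have [cv2 e2] := H2 x Hx2.
have hcv : forall c, cvgn (series (abs_hom_part c a x)) -> cvgn (series (hom_part c a x)).
  move=> c cv; apply: normed_cvg; apply: (series_le_cvg _ _ _ cv).
  - by move=> d /=.
  - by move=> d; apply: sumr_ge0.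
  - by move=> d /=; apply: ler_norm_sum.
have hE : hom_part (fun al => k1 * c1 al + k2 * c2 al) a x =
   fun d => k1 * hom_part c1 a x d + k2 * hom_part c2 a x d.
  apply: funext => d; rewrite /hom_part !mulr_sumr -big_split; apply: eq_bigr => al _.
  by rewrite mulrDl !mulrA.
have hN : forall d, 0 <= `|k1| * abs_hom_part c1 a x d + `|k2| * abs_hom_part c2 a x d.
  by move=> d; apply: addr_ge0; apply: mulr_ge0 => //; apply: sumr_ge0.
have hA : forall d, abs_hom_part (fun al => k1 * c1 al + k2 * c2 al) a x d <=
    `|k1| * abs_hom_part c1 a x d + `|k2| * abs_hom_part c2 a x d.
  move=> d; rewrite /abs_hom_part !mulr_sumr -big_split; apply: ler_sum => al _.
  rewrite mulrDl; apply: le_trans (ler_normD _ _) _.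
  by rewrite -!mulrA !normrM.
split.
  have cvS : cvgn (series (fun d => `|k1| * abs_hom_part c1 a x d + `|k2| * abs_hom_part c2 a x d)).
    by rewrite series_lin; apply: is_cvg_lin_seq.
  apply: (series_le_cvg _ _ _ cvS) => // d; exact: sumr_ge0.
by rewrite e1 e2 hE series_lin lim_lin_seq //; apply: hcv.
Qed.

Lemma sum_ffun_unit d (F : {ffun unit -> 'I_d.+1} -> R) :
  \sum_(al : {ffun unit -> 'I_d.+1} | (\sum_i nat_of_ord (al i) == d)%N) F al =
  F [ffun => ord_max].
Proof.
apply: big_pred1 => al /=.
have -> : (\sum_i nat_of_ord (al i))%N = al tt.
  by rewrite (big_pred1 tt) //; case.
apply/eqP/eqP => [H|->]; last by rewrite ffunE.
by apply/ffunP => -[]; rewrite ffunE; apply: val_inj.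
Qed.

Lemma prod_unit (F : unit -> R) : \prod_(i : unit) F i = F tt.
Proof. by rewrite (big_pred1 tt) //; case. Qed.

Lemma hom_unit (c : (unit -> nat) -> R) a x d :
  hom_part c a x d = c (fun _ => d) * (x tt - a tt) ^+ d.
Proof.
rewrite /hom_part sum_ffun_unit /monom prod_unit ffunE /=.
by congr (c _ * _); apply: funext => i; rewrite ffunE.
Qed.

Lemma abs_unit (c : (unit -> nat) -> R) a x d :
  abs_hom_part c a x d = `|c (fun _ => d) * (x tt - a tt) ^+ d|.
Proof.
rewrite /abs_hom_part sum_ffun_unit /monom prod_unit ffunE /=.
by congr (`|c _ * _|); apply: funext => i; rewrite ffunE.
Qed.

Lemma series_two (u : nat -> R) : (forall k, (2 <= k)%N -> u k = 0) ->
  series u @ \oo --> u 0%N + u 1%N.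
Proof.
move=> u0; apply: cvg_near_cst; exists 2%N => // N /= HN.
case: N HN => [|[|N]] // _.
rewrite seriesE' big_ltn // big_ltn // big_nat_cond big1 ?addr0 // => k /andP[/andP[Hk _] _].
exact: u0.
Qed.

Lemma analytic_id_unit (a : unit -> R) : analytic_at (fun y : unit -> R => y tt) a.
Proof.
exists 1; split => //.
exists (fun al : unit -> nat => if al tt == 0%N then a tt else if al tt == 1%N then 1 else 0).
move=> x _; split.
  apply/cvg_ex; eexists; apply: series_two => k Hk.
  by rewrite abs_unit; case: k Hk => [|[|k]] //= _; rewrite mul0r normr0.
have -> : x tt = a tt + (x tt - a tt) by rewrite addrC subrK.
apply/esym/cvg_lim => //.
have -> : a tt + (x tt - a tt) = hom_part (fun al : unit -> nat => if al tt == 0%N then a tt else if al tt == 1%N then 1 else 0) a x 0%N + hom_part (fun al : unit -> nat => if al tt == 0%N then a tt else if al tt == 1%N then 1 else 0) a x 1%N.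
  by rewrite !hom_unit /= expr0 mulr1 expr1 mul1r.
apply: series_two => k Hk.
by rewrite hom_unit; case: k Hk => [|[|k]] //= _; rewrite mul0r.
Qed.

Lemma analytic_coord (I : finType) (j : I) (a : I -> R) :
  analytic_at (fun x : I -> R => x j) a.
Proof.
have := @analytic_subst I unit (fun _ => Some j) (fun _ => 0) (fun y => y tt) a
  (analytic_id_unit _).
by [].
Qed.

Definition boxr (I : finType) (x a : I -> R) (r : R) := forall i, `|x i - a i| < r.

Lemma box_le (I : finType) (x a : I -> R) r r' : r <= r' -> boxr x a r -> boxr x a r'.
Proof. by move=> le h i; apply: lt_le_trans (h i) le. Qed.

Lemma box_refl (I : finType) (a : I -> R) r : 0 < r -> boxr a a r.
Proof. by move=> r0 i; rewrite subrr normr0. Qed.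

Lemma min_pos_fin (J : finType) (d : J -> R) :
  (forall j, 0 < d j) -> exists m, 0 < m /\ forall j, m <= d j.
Proof.
move=> dpos.
suff: forall s : seq J, exists m, 0 < m /\ forall j, j \in s -> m <= d j.
  by move=> /(_ (enum J))[m [m0 Hm]]; exists m; split => // j; apply: Hm; rewrite mem_enum.
elim => [|j s [m [m0 Hm]]]; first by exists 1.
exists (Num.min m (d j)); split; first by rewrite lt_min m0 dpos.
move=> i; rewrite inE => /orP[/eqP ->|/Hm h]; first by rewrite ge_min lexx orbT.
by rewrite ge_min h.
Qed.

Lemma exists_delta (J : finType) (P : J -> R -> Prop) :
  (forall j, exists d, 0 < d /\ P j d) ->
  (forall j d d', 0 < d' -> d' <= d -> P j d -> P j d') ->
  exists d, 0 < d /\ forall j, P j d.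
Proof.
move=> H Hmon.
have [f Hf] := choice H.
have [m [m0 Hm]] := min_pos_fin (fun j => (Hf j).1).
exists m; split => // j; exact: (Hmon j (f j) m m0 (Hm j) (Hf j).2).
Qed.

Definition cont1 (I : finType) (A : set (I -> R)) (f : (I -> R) -> R) :=
  forall a, A a -> forall eps, 0 < eps -> exists delta, 0 < delta /\
    forall x, A x -> boxr x a delta -> `|f x - f a| < eps.

Lemma cont_of_cont1 (I J : finType) (A : set (I -> R)) (h : (I -> R) -> J -> R) :
  (forall j, cont1 A (fun x => h x j)) -> continuous_on A h.
Proof.
move=> H a Aa eps eps0.
have [d [d0 Hd]] := @exists_delta J (fun j delta => forall x, A x -> boxr x a delta ->
   `|h x j - h a j| < eps) (fun j => H j a Aa eps eps0)
   (fun j d d' _ le P x Ax bx => P x Ax (box_le le bx)).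
by exists d; split => // x Ax bx j; apply: Hd.
Qed.

Lemma cont1_of_cont (I J : finType) (A : set (I -> R)) (h : (I -> R) -> J -> R) j :
  continuous_on A h -> cont1 A (fun x => h x j).
Proof.
move=> H a Aa eps eps0; have [d [d0 Hd]] := H a Aa eps eps0.
by exists d; split => // x Ax bx; apply: Hd.
Qed.

Lemma cont1_coord (I : finType) (A : set (I -> R)) i : cont1 A (fun x => x i).
Proof. by move=> a Aa eps eps0; exists eps; split => // x _ bx; apply: bx. Qed.

Lemma cont1_lin (I : finType) (A : set (I -> R)) f g (k1 k2 : R) :
  cont1 A f -> cont1 A g -> cont1 A (fun x => k1 * f x + k2 * g x).
Proof.
move=> Hf Hg a Aa eps eps0.
set e1 := eps / 2 / (`|k1| + 1); set e2 := eps / 2 / (`|k2| + 1).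
have e10 : 0 < e1 by rewrite /e1 divr_gt0 // ?divr_gt0 // ltr_wpDl.
have e20 : 0 < e2 by rewrite /e2 divr_gt0 // ?divr_gt0 // ltr_wpDl.
have [d1 [d10 H1]] := Hf a Aa e1 e10; have [d2 [d20 H2]] := Hg a Aa e2 e20.
exists (Num.min d1 d2); split; first by rewrite lt_min d10 d20.
move=> x Ax bx.
have b1 : boxr x a d1 by apply: box_le bx; rewrite ge_min lexx.
have b2 : boxr x a d2 by apply: box_le bx; rewrite ge_min lexx orbT.
have h1 := H1 x Ax b1; have h2 := H2 x Ax b2.
have E : k1 * f x + k2 * g x - (k1 * f a + k2 * g a) = k1 * (f x - f a) + k2 * (g x - g a).
  by rewrite !mulrBr opprD !addrA; congr (_ - _); rewrite addrAC.
rewrite E; apply: le_lt_trans (ler_normD _ _) _; rewrite !normrM.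
have q1 : `|k1| * `|f x - f a| <= eps / 2.
  apply: (le_trans (y := (`|k1| + 1) * e1)).
    apply: ler_pM => //; first by rewrite lerDl.
    exact: ltW.
  by rewrite /e1 mulrC divfK // gt_eqF // ltr_wpDl.
have q2 : `|k2| * `|g x - g a| < eps / 2.
  apply: (le_lt_trans (y := `|k2| * e2)).
    by apply: ler_wpM2l => //; apply: ltW.
  apply: (lt_le_trans (y := (`|k2| + 1) * e2)).
    by rewrite ltr_pM2r // ltrDl.
  by rewrite /e2 mulrC divfK // gt_eqF // ltr_wpDl.
by rewrite [eps]splitr; apply: ler_ltD.
Qed.

Lemma cont1_comp (I I0 : finType) (A : set (I0 -> R)) (B : set (I -> R)) rho f :
  cont1 A f -> continuous_on B rho -> (forall x, B x -> A (rho x)) ->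
  cont1 B (fun x => f (rho x)).
Proof.
move=> Hf Hr BA a Ba eps eps0.
have [d [d0 Hd]] := Hf (rho a) (BA a Ba) eps eps0.
have [d' [d'0 Hd']] := Hr a Ba d d0.
by exists d'; split => // x Bx bx; apply: Hd; [exact: BA | move=> j; apply: Hd'].
Qed.

Lemma cont_sub (I J : finType) (A B : set (I -> R)) (h : (I -> R) -> J -> R) :
  B `<=` A -> continuous_on A h -> continuous_on B h.
Proof.
move=> BA H a Ba eps eps0; have [d [d0 Hd]] := H a (BA a Ba) eps eps0.
by exists d; split => // x Bx; apply: Hd; apply: BA.
Qed.

Lemma cont_subst (I I0 : finType) (A : set (I -> R)) (s : I0 -> option I) kap :
  continuous_on A (substv s kap).
Proof.
apply: cont_of_cont1 => i0; rewrite /substv; case: (s i0) => [j|].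
  exact: cont1_coord.
by move=> a _ eps eps0; exists 1; split => // x _ _; rewrite subrr normr0.
Qed.

Lemma open_setT (I : finType) : open_set (@setT (I -> R)).
Proof. by move=> a _; exists 1; split. Qed.

Lemma open_setI (I : finType) (W1 W2 : set (I -> R)) :
  open_set W1 -> open_set W2 -> open_set (W1 `&` W2).
Proof.
move=> H1 H2 a [/H1 [r1 [r10 h1]] /H2 [r2 [r20 h2]]].
exists (Num.min r1 r2); split; first by rewrite lt_min r10 r20.
move=> x bx; split.
  by apply: h1 => i; apply: lt_le_trans (bx i) _; rewrite ge_min lexx.
by apply: h2 => i; apply: lt_le_trans (bx i) _; rewrite ge_min lexx orbT.
Qed.

Definition locsubst (I I0 : finType) (D : set (I -> R)) (rho : (I -> R) -> (I0 -> R)) :=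
  forall a, D a -> exists r, 0 < r /\ exists s kap,
    forall x, boxr x a r -> rho x = substv s kap x.

Lemma analytic_locsubst (I I0 : finType) (D : set (I -> R)) rho (F : (I0 -> R) -> R) a :
  locsubst D rho -> D a -> analytic_at F (rho a) -> analytic_at (fun x => F (rho x)) a.
Proof.
move=> Hl Da HF; have [r [r0 [s [kap Hs]]]] := Hl a Da.
have Ea : rho a = substv s kap a by apply: Hs; apply: box_refl.
apply: (analytic_at_local r0 (f := fun x => F (substv s kap x))).
  by move=> x bx; rewrite Hs.
by apply: analytic_subst; rewrite -Ea.
Qed.

Lemma open_locsubst (I I0 : finType) (D : set (I -> R)) rho (W0 : set (I0 -> R)) :
  open_set D -> locsubst D rho -> open_set W0 ->
  open_set (fun x => D x /\ W0 (rho x)).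
Proof.
move=> HD Hl HW a [Da Wa].
have [r1 [r10 h1]] := HD a Da.
have [r2 [r20 [s [kap Hs]]]] := Hl a Da.
have [r3 [r30 h3]] := HW _ Wa.
set m := Num.min r1 (Num.min r2 r3).
have m0 : 0 < m by rewrite !lt_min r10 r20 r30.
have m1 : m <= r1 by rewrite /m ge_min lexx.
have m2 : m <= r2 by rewrite /m !ge_min lexx orbT.
have m3 : m <= r3 by rewrite /m !ge_min lexx !orbT.
exists m; split => // x bx; split; first by apply: h1 => i; apply: lt_le_trans (bx i) m1.
have Ea : rho a = substv s kap a by apply: Hs; apply: box_refl.
rewrite Hs; last exact: box_le bx.
apply: h3 => i0; rewrite Ea /substv; case: (s i0) => [j|].
  exact: lt_le_trans (bx j) m3.
by rewrite subrr normr0.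
Qed.

Lemma locsubst_subst (I I0 : finType) (D : set (I -> R)) (s : I0 -> option I) kap :
  locsubst D (substv s kap).
Proof. by move=> a _; exists 1; split => //; exists s, kap. Qed.

End AnaLemmas.


Lemma cont_sel (R : realType) (I I0 : finType) (A : set (I -> R)) (sg : I0 -> I) :
  continuous_on A (fun x i0 => x (sg i0)).
Proof. exact: (@cont_subst R I I0 A (fun i0 => Some (sg i0)) (fun _ => 0)). Qed.

Lemma split_lshift m k (j : 'I_m) : fintype.split (lshift k j) = inl j.
Proof. exact: (unsplitK (inl j)). Qed.
Lemma split_rshift m k (j : 'I_k) : fintype.split (rshift m j) = inr j.
Proof. exact: (unsplitK (inr j)). Qed.

Section Disj.
Variables (R : realType) (n : nat) (L0 L1 : lk_linkage R n).
Local Notation L := (disj_union L0 L1).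

Definition lft (phi : vert L * 'I_n -> R) : vert L0 * 'I_n -> R :=
  fun p => phi (inl p.1, p.2).
Definition rgt (phi : vert L * 'I_n -> R) : vert L1 * 'I_n -> R :=
  fun p => phi (inr p.1, p.2).
Definition ljoin (a : vert L0 * 'I_n -> R) (b : vert L1 * 'I_n -> R) :
  vert L * 'I_n -> R :=
  fun p => match p.1 with inl x => a (x, p.2) | inr y => b (y, p.2) end.

Lemma config_disj phi : config L phi <-> config L0 (lft phi) /\ config L1 (rgt phi).
Proof.
split => [[Hp He]|[[Hp0 He0] [Hp1 He1]]].
  by split; split => [p|e]; [exact: (Hp (inl p)) | exact: (He (inl e))
                            | exact: (Hp (inr p)) | exact: (He (inr e))].
by split => [[p|p]|[e|e]]; [exact: Hp0 | exact: Hp1 | exact: He0 | exact: He1].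
Qed.

Lemma lft_join a b : lft (ljoin a b) = a.
Proof. by apply: funext => -[]. Qed.
Lemma rgt_join a b : rgt (ljoin a b) = b.
Proof. by apply: funext => -[]. Qed.
Lemma join_lr phi : ljoin (lft phi) (rgt phi) = phi.
Proof. by apply: funext => -[[]]. Qed.

Lemma config_join a b : config L0 a -> config L1 b -> config L (ljoin a b).
Proof. by move=> ca cb; apply/config_disj; rewrite lft_join rgt_join. Qed.

Section Cat.
Variables (k0 k1 : nat) (w0 : 'I_k0 -> vert L0) (w1 : 'I_k1 -> vert L1).

Lemma vmap_cat phi : vmap (lk_cat w0 w1) phi = tup_cat (vmap w0 (lft phi)) (vmap w1 (rgt phi)).
Proof.
apply: funext => -[i p]; rewrite /vmap /lk_cat /tup_cat /=.
by case: (fintype.split i).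
Qed.

Lemma tup_l_cat (a : tup R k0 n) (b : tup R k1 n) : tup_l (tup_cat a b) = a.
Proof. by apply: funext => -[j p]; rewrite /tup_l /tup_cat /= split_lshift. Qed.
Lemma tup_r_cat (a : tup R k0 n) (b : tup R k1 n) : tup_r (tup_cat a b) = b.
Proof. by apply: funext => -[j p]; rewrite /tup_r /tup_cat /= split_rshift. Qed.
Lemma tup_cat_lr (u : tup R (k0 + k1) n) : tup_cat (tup_l u) (tup_r u) = u.
Proof.
apply: funext => -[i p]; rewrite /tup_l /tup_r /tup_cat /=.
by case E: (fintype.split i) => [j|j]; have := splitK i; rewrite E /= => <-.
Qed.

Lemma qd_l u : qdomain (lk_cat w0 w1) u -> qdomain w0 (tup_l u).
Proof.
by move=> [phi cphi <-]; exists (lft phi); [exact: ((config_disj phi).1 cphi).1|rewrite vmap_cat tup_l_cat].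
Qed.
Lemma qd_r u : qdomain (lk_cat w0 w1) u -> qdomain w1 (tup_r u).
Proof.
by move=> [phi cphi <-]; exists (rgt phi); [exact: ((config_disj phi).1 cphi).2|rewrite vmap_cat tup_r_cat].
Qed.

End Cat.
End Disj.


Lemma restr_analytic_sel (R : realType) (I J : finType) (A : set (I -> R)) (sg : J -> I) :
  restr_analytic A (fun x j => x (sg j)).
Proof.
exists setT, (fun x j => x (sg j)); split => //; split => //.
split; first exact: open_setT.
by move=> a _ j; exact: (analytic_coord (sg j) a).
Qed.

Section Part1.
Variables (R : realType) (n k0 k1 m0 m1 : nat) (L0 L1 : lk_linkage R n)
  (w0 : 'I_k0 -> vert L0) (v0 : 'I_m0 -> vert L0)
  (w1 : 'I_k1 -> vert L1) (v1 : 'I_m1 -> vert L1)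
  (f0 : tup R k0 n -> tup R m0 n) (f1 : tup R k1 n -> tup R m1 n)
  (U0 : set (tup R k0 n)) (U1 : set (tup R k1 n)).

Local Notation L := (disj_union L0 L1).
Local Notation w := (lk_cat w0 w1).
Local Notation v := (lk_cat v0 v1).

Lemma part1_quasi : quasifunctional w0 v0 f0 -> quasifunctional w1 v1 f1 ->
  quasifunctional w v (lk_fprod f0 f1).
Proof.
move=> Q0 Q1 phi cphi; have [c0 c1] := (config_disj phi).1 cphi.
by rewrite /lk_fprod !vmap_cat tup_l_cat tup_r_cat (Q0 _ c0) (Q1 _ c1).
Qed.

Lemma part1_dom : U0 `<=` qdomain w0 -> U1 `<=` qdomain w1 ->
  lk_dprod U0 U1 `<=` qdomain w.
Proof.
move=> S0 S1 u [/S0 [phi0 c0 e0] /S1 [phi1 c1 e1]].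
exists (ljoin phi0 phi1); first exact: config_join.
by rewrite vmap_cat lft_join rgt_join e0 e1 tup_cat_lr.
Qed.

Lemma part1_strong :
  lk_strongly_functional w0 v0 f0 U0 -> lk_strongly_functional w1 v1 f1 U1 ->
  lk_strongly_functional w v (lk_fprod f0 f1) (lk_dprod U0 U1).
Proof.
move=> [Q0 [S0 [g0 [Ia0 [Ib0 [Ic0 [Id0 [Ca0 [Cb0 [Aa0 Ab0]]]]]]]]]].
move=> [Q1 [S1 [g1 [Ia1 [Ib1 [Ic1 [Id1 [Ca1 [Cb1 [Aa1 Ab1]]]]]]]]]].
split; first exact: part1_quasi.
split; first exact: part1_dom.
exists (fun u => ljoin (g0 (tup_l u)) (g1 (tup_r u))).
split; first by move=> x cx; exists x.
split.
  move=> y qy; apply: config_join; [apply: Ib0; exact: (qd_l qy) | apply: Ib1; exact: (qd_r qy)].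
split.
  move=> x cx; have [c0 c1] := (config_disj x).1 cx.
  by rewrite vmap_cat tup_l_cat tup_r_cat Ic0 // Ic1 // join_lr.
split.
  move=> y qy; rewrite vmap_cat lft_join rgt_join Id0 ?Id1 ?tup_cat_lr //.
    exact: (qd_r qy).
  exact: (qd_l qy).
split; first exact: (@cont_sel R _ _ _ (fun p : 'I_(k0 + k1) * 'I_n => (w p.1, p.2))).
split.
  apply: cont_of_cont1 => -[[x|y] i] /=.
    apply: (cont1_comp (A := qdomain w0) (f := fun z => g0 z (x, i)) (rho := @tup_l R n k0 k1)).
    - by apply: cont1_of_cont; exact: Cb0.
    - exact: (@cont_sel R _ _ _ (fun p : 'I_k0 * 'I_n => (lshift k1 p.1, p.2))).
    - by move=> z hz; exact: (qd_l hz).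
  apply: (cont1_comp (A := qdomain w1) (f := fun z => g1 z (y, i)) (rho := @tup_r R n k0 k1)).
  - by apply: cont1_of_cont; exact: Cb1.
  - exact: (@cont_sel R _ _ _ (fun p : 'I_k1 * 'I_n => (rshift k0 p.1, p.2))).
  - by move=> z hz; exact: (qd_r hz).
split; first exact: (@restr_analytic_sel R _ _ _ (fun p : 'I_(k0 + k1) * 'I_n => (w p.1, p.2))).
have [W0 [G0 [sW0 [[oW0 aG0] eG0]]]] := Ab0.
have [W1 [G1 [sW1 [[oW1 aG1] eG1]]]] := Ab1.
pose s0 := fun p : 'I_k0 * 'I_n => Some (lshift k1 p.1, p.2).
pose s1 := fun p : 'I_k1 * 'I_n => Some (rshift k0 p.1, p.2).
have El u : tup_l u = substv s0 (fun _ => 0) u by [].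
have Er u : tup_r u = substv s1 (fun _ => 0) u by [].
exists ((fun u => setT u /\ W0 (substv s0 (fun _ => 0) u)) `&`
        (fun u => setT u /\ W1 (substv s1 (fun _ => 0) u))).
exists (fun u => ljoin (G0 (tup_l u)) (G1 (tup_r u))).
split.
  move=> u qu; split; split => //; rewrite -?El -?Er.
    by apply: sW0; exact: (qd_l qu).
  by apply: sW1; exact: (qd_r qu).
split.
  split.
    apply: open_setI; apply: open_locsubst => //; try exact: open_setT;
    exact: locsubst_subst.
  move=> a [[_ Wa0] [_ Wa1]] [[x|y] i] /=.
    apply: (analytic_locsubst (D := setT) (rho := substv s0 (fun _ => 0))
             (F := fun z => G0 z (x, i))) => //; first exact: locsubst_subst.
    exact: aG0.
  apply: (analytic_locsubst (D := setT) (rho := substv s1 (fun _ => 0))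
           (F := fun z => G1 z (y, i))) => //; first exact: locsubst_subst.
  exact: aG1.
move=> u qu; rewrite eG0 ?eG1 //; [exact: (qd_r qu) | exact: (qd_l qu)].
Qed.

End Part1.


Section Dec.
Variable R : realType.

Definition decn (e : nat) (t : R) : nat :=
  if [pick c : 'I_e | `|t - (nat_of_ord c)%:R| < 2^-1] is Some c then nat_of_ord c else 0%N.

Lemma nat_close (c c' : nat) : `|c%:R - c'%:R : R| < 1 -> c = c'.
Proof.
move=> H; apply/eqP; apply: contraLR H => hne; rewrite -leNgt.
case: (ltngtP c c') hne => // hc _.
  by rewrite distrC -(natrB _ (ltnW hc)) normr_nat ler1n subn_gt0.
by rewrite -(natrB _ (ltnW hc)) normr_nat ler1n subn_gt0.
Qed.

Lemma dec_near e (c : 'I_e) t : `|t - (nat_of_ord c)%:R| < 2^-1 -> decn e t = c.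
Proof.
move=> Ht; rewrite /decn; case: pickP => [c' Hc'|H]; last by have := H c; rewrite Ht.
apply: nat_close; apply: le_lt_trans (ler_distD t _ _) _.
rewrite distrC; apply: lt_le_trans (ltrD Hc' Ht) _.
by rewrite [X in _ <= X](splitr 1) !mul1r.
Qed.

Lemma dec_nat e (c : 'I_e) : decn e (nat_of_ord c)%:R = c.
Proof. by apply: dec_near; rewrite subrr normr0 invr_gt0. Qed.

Definition Dz (I : finType) (e : nat) : set (option I -> R) :=
  fun z => exists c : 'I_e, `|z None - (nat_of_ord c)%:R| < 2^-1.

Lemma open_Dz (I : finType) e : open_set (@Dz I e).
Proof.
move=> a [c Hc]; exists (2^-1 - `|a None - (nat_of_ord c)%:R|); split.
  by rewrite subr_gt0.
move=> x bx; exists c.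
apply: (le_lt_trans (y := `|x None - a None| + `|a None - (nat_of_ord c)%:R|)).
  have -> : x None - (nat_of_ord c)%:R = (x None - a None) + (a None - (nat_of_ord c)%:R).
    by rewrite addrA subrK.
  exact: ler_normD.
by rewrite -ltrBrDr; apply: bx.
Qed.

Definition piEnc (I I0 : finType) (e : nat) (s : I0 -> I) (h : nat -> nat)
  (z : option I -> R) : option I0 -> R :=
  fun o => match o with Some p => z (Some (s p)) | None => (h (decn e (z None)))%:R end.

Lemma locsubst_piE (I I0 : finType) e (s : I0 -> I) h :
  locsubst (@Dz I e) (piEnc e s h).
Proof.
move=> a [c Hc]; exists (2^-1 - `|a None - (nat_of_ord c)%:R|); split.
  by rewrite subr_gt0.
exists (fun o => if o is Some p then Some (Some (s p)) else None).
exists (fun _ => (h c)%:R) => x bx; apply: funext => -[p|] //=.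
rewrite (@dec_near e c) //.
apply: (le_lt_trans (y := `|x None - a None| + `|a None - (nat_of_ord c)%:R|)).
  have -> : x None - (nat_of_ord c)%:R = (x None - a None) + (a None - (nat_of_ord c)%:R).
    by rewrite addrA subrK.
  exact: ler_normD.
by rewrite -ltrBrDr; apply: bx.
Qed.

Lemma cont_piE (k nn : nat) (I0 : finType) e (s : I0 -> 'I_k * 'I_nn) h (U : set (tup R k nn)) :
  continuous_on (prodE U e) (piEnc e s h).
Proof.
apply: cont_of_cont1 => -[p|] /=.
  by move=> a _ eps eps0; exists eps; split => // x _ bx; apply: bx.
move=> a [_ [c Ha]] eps eps0; exists 2^-1; split; first by rewrite invr_gt0.
move=> x [_ [c' Hx]] bx.
have E : nat_of_ord c' = nat_of_ord c.
  apply: nat_close; have := bx None; rewrite Hx Ha => H; apply: lt_trans H _.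
  by rewrite invf_lt1 // ltr1n.
by rewrite Hx Ha E subrr normr0.
Qed.

End Dec.


Lemma cont1_ext (R : realType) (I : finType) (A : set (I -> R)) f g :
  (forall x, f x = g x) -> cont1 A f -> cont1 A g.
Proof. by move=> fg; rewrite (_ : f = g) //; apply: funext. Qed.

Lemma analytic_ext (R : realType) (I : finType) (f g : (I -> R) -> R) a :
  (forall x, f x = g x) -> analytic_at f a -> analytic_at g a.
Proof. by move=> fg; rewrite (_ : f = g) //; apply: funext. Qed.

Lemma enc_lt (c0 c1 e0 e1 : nat) : (c0 < e0)%N -> (c1 < e1)%N -> (c0 + e0 * c1 < e0 * e1)%N.
Proof. move=> h0 h1; nia. Qed.

Lemma pos_of_ord (e0 e1 : nat) (c : 'I_(e0 * e1)) : (0 < e0)%N.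
Proof. by case: c => m /(leq_ltn_trans (leq0n m)); rewrite muln_gt0 => /andP[]. Qed.

Section Part1F.
Variables (R : realType) (n k0 k1 m0 m1 : nat) (L0 L1 : lk_linkage R n)
  (w0 : 'I_k0 -> vert L0) (v0 : 'I_m0 -> vert L0)
  (w1 : 'I_k1 -> vert L1) (v1 : 'I_m1 -> vert L1)
  (f0 : tup R k0 n -> tup R m0 n) (f1 : tup R k1 n -> tup R m1 n)
  (U0 : set (tup R k0 n)) (U1 : set (tup R k1 n)).

Local Notation L := (disj_union L0 L1).
Local Notation w := (lk_cat w0 w1).
Local Notation v := (lk_cat v0 v1).

Variables (e0 e1 : nat)
  (sg0 : (option ('I_k0 * 'I_n) -> R) -> (vert L0 * 'I_n -> R))
  (sg1 : (option ('I_k1 * 'I_n) -> R) -> (vert L1 * 'I_n -> R))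
  (ga0 : (vert L0 * 'I_n -> R) -> (option ('I_k0 * 'I_n) -> R))
  (ga1 : (vert L1 * 'I_n -> R) -> (option ('I_k1 * 'I_n) -> R)).

Local Notation B0 := (config L0 `&` (vmap w0 @^-1` U0)).
Local Notation B1 := (config L1 `&` (vmap w1 @^-1` U1)).
Local Notation P0 := (prodE U0 e0).
Local Notation P1 := (prodE U1 e1).
Local Notation U := (lk_dprod U0 U1).
Local Notation B := (config L `&` (vmap w @^-1` U)).
Local Notation P := (prodE U (e0 * e1)%N).

Hypotheses (Ia0 : forall z, P0 z -> B0 (sg0 z)) (Ib0 : forall x, B0 x -> P0 (ga0 x))
  (Ic0 : forall z, P0 z -> ga0 (sg0 z) = z) (Id0 : forall x, B0 x -> sg0 (ga0 x) = x)
  (Ie0 : forall z, P0 z -> vmap w0 (sg0 z) = (fun p => z (Some p))).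
Hypotheses (Ia1 : forall z, P1 z -> B1 (sg1 z)) (Ib1 : forall x, B1 x -> P1 (ga1 x))
  (Ic1 : forall z, P1 z -> ga1 (sg1 z) = z) (Id1 : forall x, B1 x -> sg1 (ga1 x) = x)
  (Ie1 : forall z, P1 z -> vmap w1 (sg1 z) = (fun p => z (Some p))).

Definition pr0 := @piEnc R _ _ (e0 * e1)%N (fun p : 'I_k0 * 'I_n => (lshift k1 p.1, p.2)) (fun c => c %% e0)%N.
Definition pr1 := @piEnc R _ _ (e0 * e1)%N (fun p : 'I_k1 * 'I_n => (rshift k0 p.1, p.2)) (fun c => c %/ e0)%N.
Definition sgm (z : option ('I_(k0 + k1) * 'I_n) -> R) : vert L * 'I_n -> R :=
  ljoin (sg0 (pr0 z)) (sg1 (pr1 z)).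
Definition gam (phi : vert L * 'I_n -> R) : option ('I_(k0 + k1) * 'I_n) -> R :=
  fun o => match o with
           | Some p => vmap w phi p
           | None => ga0 (lft phi) None + (e0%:R) * ga1 (rgt phi) None end.

Lemma pr0P z : P z -> P0 (pr0 z).
Proof.
move=> [[Hu0 _] [c Hc]]; split; first exact: Hu0.
have e0pos : (0 < e0)%N := pos_of_ord c.
exists (Ordinal (ltn_pmod c e0pos)); rewrite /pr0 /piEnc /= Hc dec_nat //.
Qed.

Lemma pr1P z : P z -> P1 (pr1 z).
Proof.
move=> [[_ Hu1] [c Hc]]; split; first exact: Hu1.
have e0pos : (0 < e0)%N := pos_of_ord c.
have lt : (c %/ e0 < e1)%N by rewrite ltn_divLR // (mulnC e1 e0).
exists (Ordinal lt); rewrite /pr1 /piEnc /= Hc dec_nat //.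
Qed.

Lemma BlP phi : B phi -> B0 (lft phi).
Proof.
move=> [cphi [Hu0 _]]; split; first exact: ((config_disj phi).1 cphi).1.
by rewrite /preimage /= -(tup_l_cat (vmap w0 (lft phi)) (vmap w1 (rgt phi))) -vmap_cat.
Qed.

Lemma BrP phi : B phi -> B1 (rgt phi).
Proof.
move=> [cphi [_ Hu1]]; split; first exact: ((config_disj phi).1 cphi).2.
by rewrite /preimage /= -(tup_r_cat (vmap w0 (lft phi)) (vmap w1 (rgt phi))) -vmap_cat.
Qed.

Lemma sgm_vmap z : P z -> vmap w (sgm z) = (fun p => z (Some p)).
Proof.
move=> Pz; rewrite /sgm vmap_cat lft_join rgt_join.
rewrite (Ie0 (pr0P Pz)) (Ie1 (pr1P Pz)).
exact: (tup_cat_lr (fun p => z (Some p))).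
Qed.

Lemma sgmP z : P z -> B (sgm z).
Proof.
move=> Pz; split; first by apply: config_join; [apply: (Ia0 (pr0P Pz)).1 | apply: (Ia1 (pr1P Pz)).1].
by rewrite /preimage /= sgm_vmap //; case: Pz.
Qed.

Lemma gamP phi : B phi -> P (gam phi).
Proof.
move=> Bphi; split; first by case: Bphi.
have [_ [c0 h0]] := Ib0 (BlP Bphi); have [_ [c1 h1]] := Ib1 (BrP Bphi).
exists (Ordinal (enc_lt (ltn_ord c0) (ltn_ord c1))).
by rewrite /gam h0 h1 /= natrD natrM.
Qed.

Lemma gam_sgm z : P z -> gam (sgm z) = z.
Proof.
move=> Pz; apply: funext => -[p|].
  by rewrite /gam sgm_vmap.
rewrite /gam /sgm lft_join rgt_join (Ic0 (pr0P Pz)) (Ic1 (pr1P Pz)).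
case: Pz => _ [c Hc]; rewrite /pr0 /pr1 /piEnc Hc dec_nat -natrM -natrD.
by rewrite (mulnC e0 (c %/ e0)%N) addnC -divn_eq.
Qed.

Lemma vl phi : tup_l (vmap w phi) = vmap w0 (lft phi).
Proof. by rewrite vmap_cat tup_l_cat. Qed.
Lemma vr phi : tup_r (vmap w phi) = vmap w1 (rgt phi).
Proof. by rewrite vmap_cat tup_r_cat. Qed.

Lemma sgm_gam phi : B phi -> sgm (gam phi) = phi.
Proof.
move=> Bphi.
have [_ [c0 h0]] := Ib0 (BlP Bphi); have [_ [c1 h1]] := Ib1 (BrP Bphi).
have Hg : gam phi None = (nat_of_ord (Ordinal (enc_lt (ltn_ord c0) (ltn_ord c1))))%:R.
  by rewrite /gam h0 h1 /= natrD natrM.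
have e0pos : (0 < e0)%N by apply: (leq_ltn_trans (leq0n _) (ltn_ord c0)).
have Ey0 : (fun p => ga0 (lft phi) (Some p)) = vmap w0 (lft phi).
  by rewrite -(Ie0 (Ib0 (BlP Bphi))) (Id0 (BlP Bphi)).
have Ey1 : (fun p => ga1 (rgt phi) (Some p)) = vmap w1 (rgt phi).
  by rewrite -(Ie1 (Ib1 (BrP Bphi))) (Id1 (BrP Bphi)).
have E0 : pr0 (gam phi) = ga0 (lft phi).
  apply: funext => -[p|].
    transitivity (tup_l (vmap w phi) p); first by [].
    have /= E := congr1 (fun f => f p) Ey0.
    by rewrite vl E.
  rewrite /pr0 /piEnc Hg dec_nat h0 /=.
  have -> : ((c0 + e0 * c1) %% e0 = c0)%N.
    by rewrite addnC (mulnC e0 c1) modnMDl modn_small.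
  by [].
have E1 : pr1 (gam phi) = ga1 (rgt phi).
  apply: funext => -[p|].
    transitivity (tup_r (vmap w phi) p); first by [].
    have /= E := congr1 (fun f => f p) Ey1.
    by rewrite vr E.
  rewrite /pr1 /piEnc Hg dec_nat h1 /=.
  have -> : ((c0 + e0 * c1) %/ e0 = c1)%N.
    by rewrite addnC (mulnC e0 c1) divnMDl // divn_small // addn0.
  by [].
by rewrite /sgm E0 E1 (Id0 (BlP Bphi)) (Id1 (BrP Bphi)) join_lr.
Qed.

Lemma cont_sgm : continuous_on P0 sg0 -> continuous_on P1 sg1 -> continuous_on P sgm.
Proof.
move=> C0 C1; apply: cont_of_cont1 => -[[x|y] i].
  apply: (cont1_comp (A := P0) (f := fun z => sg0 z (x, i)) (rho := pr0)).
  - exact: cont1_of_cont.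
  - exact: cont_piE.
  - by move=> z Pz; apply: pr0P.
apply: (cont1_comp (A := P1) (f := fun z => sg1 z (y, i)) (rho := pr1)).
- exact: cont1_of_cont.
- exact: cont_piE.
- by move=> z Pz; apply: pr1P.
Qed.

Definition lsel (p : vert L0 * 'I_n) : option (vert L * 'I_n) := Some (inl p.1, p.2).
Definition rsel (p : vert L1 * 'I_n) : option (vert L * 'I_n) := Some (inr p.1, p.2).

Lemma cont_gam : continuous_on B0 ga0 -> continuous_on B1 ga1 -> continuous_on B gam.
Proof.
move=> C0 C1; apply: cont_of_cont1 => -[p|].
  by move=> a _ eps eps0; exists eps; split => // x _ bx; exact: (bx (w p.1, p.2)).
apply: (cont1_ext (f := fun phi => 1 * ga0 (lft phi) None + e0%:R * ga1 (rgt phi) None)).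
  by move=> x; rewrite mul1r.
apply: cont1_lin.
  apply: (cont1_comp (A := B0) (f := fun z => ga0 z None) (rho := @lft R n L0 L1)).
  - exact: cont1_of_cont.
  - exact: (@cont_subst R _ _ B lsel (fun _ => 0)).
  - by move=> z Bz; apply: BlP.
apply: (cont1_comp (A := B1) (f := fun z => ga1 z None) (rho := @rgt R n L0 L1)).
- exact: cont1_of_cont.
- exact: (@cont_subst R _ _ B rsel (fun _ => 0)).
- by move=> z Bz; apply: BrP.
Qed.

Lemma PDz z : P z -> Dz (e0 * e1)%N z.
Proof. by move=> [_ [c Hc]]; exists c; rewrite Hc subrr normr0 invr_gt0. Qed.

Lemma ra_sgm : restr_analytic P0 sg0 -> restr_analytic P1 sg1 -> restr_analytic P sgm.
Proof.
move=> [W0 [G0 [sW0 [[oW0 aG0] eG0]]]] [W1 [G1 [sW1 [[oW1 aG1] eG1]]]].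
exists ((fun z => Dz (e0 * e1)%N z /\ W0 (pr0 z)) `&` (fun z => Dz (e0 * e1)%N z /\ W1 (pr1 z))).
exists (fun z => ljoin (G0 (pr0 z)) (G1 (pr1 z))).
split.
  move=> z Pz; split; split; try exact: PDz.
    by apply: sW0; apply: pr0P.
  by apply: sW1; apply: pr1P.
split.
  split.
    by apply: open_setI; apply: open_locsubst => //; [exact: open_Dz | exact: locsubst_piE
      | exact: open_Dz | exact: locsubst_piE].
  move=> a [[Da W0a] [_ W1a]] [[x|y] i].
    apply: (analytic_locsubst (D := Dz (e0 * e1)%N) (rho := pr0) (F := fun z => G0 z (x, i))) => //.
      exact: locsubst_piE.
    exact: aG0.
  apply: (analytic_locsubst (D := Dz (e0 * e1)%N) (rho := pr1) (F := fun z => G1 z (y, i))) => //.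
    exact: locsubst_piE.
  exact: aG1.
by move=> z Pz; rewrite /sgm (eG0 _ (pr0P Pz)) (eG1 _ (pr1P Pz)).
Qed.

Lemma ra_gam : restr_analytic B0 ga0 -> restr_analytic B1 ga1 -> restr_analytic B gam.
Proof.
move=> [W0 [G0 [sW0 [[oW0 aG0] eG0]]]] [W1 [G1 [sW1 [[oW1 aG1] eG1]]]].
exists ((fun phi => setT phi /\ W0 (substv lsel (fun _ => 0) phi)) `&`
        (fun phi => setT phi /\ W1 (substv rsel (fun _ => 0) phi))).
exists (fun phi o => match o with
        | Some p => phi (w p.1, p.2)
        | None => G0 (lft phi) None + e0%:R * G1 (rgt phi) None end).
split.
  move=> phi Bphi; split; split => //.
    by apply: sW0; apply: BlP.
  by apply: sW1; apply: BrP.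
split.
  split.
    apply: open_setI; apply: open_locsubst => //; try exact: open_setT;
    exact: locsubst_subst.
  move=> a [[_ W0a] [_ W1a]] [p|].
    exact: (analytic_coord (w p.1, p.2) a).
  apply: (analytic_ext (f := fun phi => 1 * G0 (lft phi) None + e0%:R * G1 (rgt phi) None)).
    by move=> x; rewrite mul1r.
  apply: analytic_lin.
    apply: (analytic_locsubst (D := setT) (rho := substv lsel (fun _ => 0))
              (F := fun z => G0 z None)) => //; first exact: locsubst_subst.
    exact: aG0.
  apply: (analytic_locsubst (D := setT) (rho := substv rsel (fun _ => 0))
            (F := fun z => G1 z None)) => //; first exact: locsubst_subst.
  exact: aG1.
move=> phi Bphi; apply: funext => -[p|] //=.
by rewrite (eG0 _ (BlP Bphi)) (eG1 _ (BrP Bphi)).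
Qed.

End Part1F.


Lemma part1_func (R : realType) (n k0 k1 m0 m1 : nat) (L0 L1 : lk_linkage R n)
  (w0 : 'I_k0 -> vert L0) (v0 : 'I_m0 -> vert L0)
  (w1 : 'I_k1 -> vert L1) (v1 : 'I_m1 -> vert L1)
  (f0 : tup R k0 n -> tup R m0 n) (f1 : tup R k1 n -> tup R m1 n)
  (U0 : set (tup R k0 n)) (U1 : set (tup R k1 n)) :
  lk_functional w0 v0 f0 U0 -> lk_functional w1 v1 f1 U1 ->
  lk_functional (lk_cat w0 w1) (lk_cat v0 v1) (lk_fprod f0 f1) (lk_dprod U0 U1).
Proof.
move=> [Q0 [S0 [e0 [sg0 [[ga0 [Ia0 [Ib0 [Ic0 [Id0 [Ca0 [Cb0 [Aa0 Ab0]]]]]]]] Ie0]]]]].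
move=> [Q1 [S1 [e1 [sg1 [[ga1 [Ia1 [Ib1 [Ic1 [Id1 [Ca1 [Cb1 [Aa1 Ab1]]]]]]]] Ie1]]]]].
split; first exact: part1_quasi.
split; first exact: part1_dom.
exists (e0 * e1)%N, (sgm e0 e1 sg0 sg1).
split; last by move=> z Pz; exact: (sgm_vmap Ie0 Ie1 Pz).
exists (gam w0 w1 e0 ga0 ga1).
split; first by (move=> z Pz; eapply sgmP; eassumption).
split; first by (move=> x Bx; eapply gamP; eassumption).
split; first by (move=> z Pz; eapply gam_sgm; eassumption).
split; first by (move=> x Bx; eapply sgm_gam; eassumption).
split; first by (eapply cont_sgm; eassumption).
split; first by (eapply cont_gam; eassumption).
split; first by (eapply ra_sgm; eassumption).
eapply ra_gam; eassumption.
Qed.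


Section Glue2.
Variables (R : realType) (n k : nat) (L0 L1 : lk_linkage R n).
Variables (w0 : 'I_k -> vert L0) (w1 : 'I_k -> vert L1).
Local Notation L := (disj_union L0 L1).
Local Notation V := (vert (disj_union L0 L1)).
Local Notation L' := (glue_linkage w0 w1).
Local Notation proj := (glue_proj w0 w1).

Lemma glue_sym : symmetric (glue_rel w0 w1).
Proof. by move=> x y; rewrite /glue_rel; apply: eq_existsb => j; rewrite orbC. Qed.

Lemma glue_csym : connect_sym (glue_rel w0 w1).
Proof. exact: sym_connect_sym glue_sym. Qed.

Lemma proj_eq x y : connect (glue_rel w0 w1) x y -> proj x = proj y.
Proof.
move=> H; apply: val_inj => /=; rewrite /glue_class; apply/setP => z.
by rewrite !inE (same_connect glue_csym H).
Qed.

Lemma proj_conn x y : proj x = proj y -> connect (glue_rel w0 w1) x y.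
Proof.
move/(congr1 val) => /= E.
have : y \in glue_class w0 w1 y by rewrite inE connect0.
by rewrite -E inE.
Qed.

Definition grp (X : glue_vert w0 w1) : V := xchoose (elimT existsP (valP X)).

Lemma proj_rep X : proj (grp X) = X.
Proof.
apply: val_inj => /=; have := xchooseP (elimT existsP (valP X)).
by move/eqP => ->.
Qed.

Definition gup (phi' : vert L' * 'I_n -> R) : vert L * 'I_n -> R :=
  fun p => phi' (proj p.1, p.2).
Definition gdown (psi : vert L * 'I_n -> R) : vert L' * 'I_n -> R :=
  fun p => psi (grp p.1, p.2).

Lemma down_up phi' : gdown (gup phi') = phi'.
Proof. by apply: funext => -[X i]; rewrite /gdown /gup /= proj_rep. Qed.

Definition compat (psi : vert L * 'I_n -> R) :=
  forall j i, psi (inl (w0 j), i) = psi (inr (w1 j), i).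

Lemma compat_conn psi : compat psi -> forall x y i,
  connect (glue_rel w0 w1) x y -> psi (x, i) = psi (y, i).
Proof.
move=> C x y i /connectP [p Hp ->].
elim: p x Hp => [|z p IH] x //= /andP [Hxz Hp].
rewrite -(IH z Hp).
move/existsP: Hxz => [j /orP [/andP [/eqP -> /eqP ->]|/andP [/eqP -> /eqP ->]]].
  exact: C.
exact: esym (C j i).
Qed.

Lemma up_down psi : compat psi -> gup (gdown psi) = psi.
Proof.
move=> C; apply: funext => -[x i]; rewrite /gup /gdown /=.
by apply: compat_conn => //; apply: proj_conn; rewrite proj_rep.
Qed.

Lemma compat_up phi' : compat (gup phi').
Proof.
move=> j i; rewrite /gup /=; congr phi'; congr pair; apply: proj_eq; apply: connect1.
by rewrite /glue_rel; apply/existsP; exists j; rewrite !eqxx.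
Qed.

Lemma config_glue phi' : config L' phi' <-> config L (gup phi').
Proof. by split => H; exact: H. Qed.

Lemma compat_join a b : vmap w0 a = vmap w1 b -> compat (ljoin a b).
Proof. by move=> E j i; have := congr1 (fun f => f (j, i)) E. Qed.

Lemma compat_vmap psi : compat psi -> vmap w0 (lft psi) = vmap w1 (rgt psi).
Proof. by move=> C; apply: funext => -[j i]; exact: C. Qed.

Definition wg : 'I_k -> vert L' := fun j => proj (inl (w0 j)).

Lemma vmap_wg phi' : vmap wg phi' = vmap w0 (lft (gup phi')).
Proof. by []. Qed.

Lemma vmap_wg1 phi' : vmap wg phi' = vmap w1 (rgt (gup phi')).
Proof. by rewrite vmap_wg compat_vmap //; exact: compat_up. Qed.

Lemma qdg0 u : qdomain wg u -> qdomain w0 u.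
Proof.
move=> [phi' c <-]; exists (lft (gup phi')); last by rewrite vmap_wg.
by have [] := (config_disj (gup phi')).1 ((config_glue phi').1 c).
Qed.

Lemma qdg1 u : qdomain wg u -> qdomain w1 u.
Proof.
move=> [phi' c <-]; exists (rgt (gup phi')); last by rewrite vmap_wg1.
by have [] := (config_disj (gup phi')).1 ((config_glue phi').1 c).
Qed.

End Glue2.


Section Part2S.
Variables (R : realType) (n k m0 m1 : nat) (L0 L1 : lk_linkage R n)
  (w0 : 'I_k -> vert L0) (v0 : 'I_m0 -> vert L0)
  (w1 : 'I_k -> vert L1) (v1 : 'I_m1 -> vert L1)
  (f0 : tup R k n -> tup R m0 n) (f1 : tup R k n -> tup R m1 n)
  (U0 : set (tup R k n)) (U1 : set (tup R k n)).

Local Notation L := (disj_union L0 L1).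
Local Notation L' := (glue_linkage w0 w1).
Local Notation wg := (wg w0 w1).
Definition vg : 'I_(m0 + m1) -> vert L' := fun i => glue_proj w0 w1 (lk_cat v0 v1 i).

Lemma part2_quasi : quasifunctional w0 v0 f0 -> quasifunctional w1 v1 f1 ->
  quasifunctional wg vg (lk_fpair f0 f1).
Proof.
move=> Q0 Q1 phi' c'; have c := (config_glue phi').1 c'.
have [c0 c1] := (config_disj _).1 c.
change (vmap (lk_cat v0 v1) (gup phi') = tup_cat (f0 (vmap wg phi')) (f1 (vmap wg phi'))).
by rewrite vmap_cat (Q0 _ c0) (Q1 _ c1) -vmap_wg -vmap_wg1.
Qed.

Lemma part2_dom : U0 `<=` qdomain w0 -> U1 `<=` qdomain w1 ->
  U0 `&` U1 `<=` qdomain wg.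
Proof.
move=> S0 S1 u [/S0 [phi0 c0 e0] /S1 [phi1 c1 e1]].
have C : compat w0 w1 (ljoin phi0 phi1) by apply: compat_join; rewrite e0 e1.
exists (gdown (ljoin phi0 phi1)).
  by apply/config_glue; rewrite up_down //; exact: config_join.
by rewrite vmap_wg up_down // lft_join.
Qed.

Lemma part2_strong :
  lk_strongly_functional w0 v0 f0 U0 -> lk_strongly_functional w1 v1 f1 U1 ->
  lk_strongly_functional wg vg (lk_fpair f0 f1) (U0 `&` U1).
Proof.
move=> [Q0 [S0 [g0 [Ia0 [Ib0 [Ic0 [Id0 [Ca0 [Cb0 [Aa0 Ab0]]]]]]]]]].
move=> [Q1 [S1 [g1 [Ia1 [Ib1 [Ic1 [Id1 [Ca1 [Cb1 [Aa1 Ab1]]]]]]]]]].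
split; first exact: part2_quasi.
split; first exact: part2_dom.
have C : forall u, qdomain wg u -> compat w0 w1 (ljoin (g0 u) (g1 u)).
  move=> u qu; apply: compat_join.
  by rewrite (Id0 _ (qdg0 qu)) (Id1 _ (qdg1 qu)).
exists (fun u => gdown (ljoin (g0 u) (g1 u))).
split; first by move=> x cx; exists x.
split.
  move=> y qy; apply/config_glue; rewrite up_down; last exact: C.
  exact: config_join (Ib0 _ (qdg0 qy)) (Ib1 _ (qdg1 qy)).
split.
  move=> x cx; have c := (config_glue x).1 cx.
  have [c0 c1] := (config_disj _).1 c.
  by rewrite {1}vmap_wg (Ic0 _ c0) vmap_wg1 (Ic1 _ c1) join_lr down_up.
split.
  move=> y qy; rewrite vmap_wg up_down; last exact: C.
  by rewrite lft_join (Id0 _ (qdg0 qy)).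
split; first exact: (@cont_sel R _ _ _ (fun p : 'I_k * 'I_n => (wg p.1, p.2))).
split.
  apply: cont_of_cont1 => -[X i]; rewrite /gdown /ljoin /=.
  case: (grp X) => [x|y].
    apply: cont1_of_cont; apply: (cont_sub _ Cb0).
    by move=> u qu; exact: (qdg0 qu).
  apply: cont1_of_cont; apply: (cont_sub _ Cb1).
  by move=> u qu; exact: (qdg1 qu).
split; first exact: (@restr_analytic_sel R _ _ _ (fun p : 'I_k * 'I_n => (wg p.1, p.2))).
have [W0 [G0 [sW0 [[oW0 aG0] eG0]]]] := Ab0.
have [W1 [G1 [sW1 [[oW1 aG1] eG1]]]] := Ab1.
exists (W0 `&` W1), (fun u => gdown (ljoin (G0 u) (G1 u))).
split.
  move=> u qu; split; [apply: sW0; exact: (qdg0 qu) | apply: sW1; exact: (qdg1 qu)].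
split.
  split; first exact: open_setI.
  move=> a [Wa0 Wa1] [X i]; rewrite /gdown /ljoin /=.
  by case: (grp X) => [x|y]; [exact: aG0 | exact: aG1].
by move=> u qu; rewrite (eG0 _ (qdg0 qu)) (eG1 _ (qdg1 qu)).
Qed.

End Part2S.


Section Part2F.
Variables (R : realType) (n k m0 m1 : nat) (L0 L1 : lk_linkage R n)
  (w0 : 'I_k -> vert L0) (v0 : 'I_m0 -> vert L0)
  (w1 : 'I_k -> vert L1) (v1 : 'I_m1 -> vert L1)
  (f0 : tup R k n -> tup R m0 n) (f1 : tup R k n -> tup R m1 n)
  (U0 : set (tup R k n)) (U1 : set (tup R k n)).

Local Notation L := (disj_union L0 L1).
Local Notation L' := (glue_linkage w0 w1).
Local Notation wg := (wg w0 w1).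

Variables (e0 e1 : nat)
  (sg0 : (option ('I_k * 'I_n) -> R) -> (vert L0 * 'I_n -> R))
  (sg1 : (option ('I_k * 'I_n) -> R) -> (vert L1 * 'I_n -> R))
  (ga0 : (vert L0 * 'I_n -> R) -> (option ('I_k * 'I_n) -> R))
  (ga1 : (vert L1 * 'I_n -> R) -> (option ('I_k * 'I_n) -> R)).

Local Notation B0 := (config L0 `&` (vmap w0 @^-1` U0)).
Local Notation B1 := (config L1 `&` (vmap w1 @^-1` U1)).
Local Notation P0 := (prodE U0 e0).
Local Notation P1 := (prodE U1 e1).
Local Notation U := (U0 `&` U1).
Local Notation B := (config L' `&` (vmap wg @^-1` U)).
Local Notation P := (prodE U (e0 * e1)%N).

Hypotheses (Ia0 : forall z, P0 z -> B0 (sg0 z)) (Ib0 : forall x, B0 x -> P0 (ga0 x))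
  (Ic0 : forall z, P0 z -> ga0 (sg0 z) = z) (Id0 : forall x, B0 x -> sg0 (ga0 x) = x)
  (Ie0 : forall z, P0 z -> vmap w0 (sg0 z) = (fun p => z (Some p))).
Hypotheses (Ia1 : forall z, P1 z -> B1 (sg1 z)) (Ib1 : forall x, B1 x -> P1 (ga1 x))
  (Ic1 : forall z, P1 z -> ga1 (sg1 z) = z) (Id1 : forall x, B1 x -> sg1 (ga1 x) = x)
  (Ie1 : forall z, P1 z -> vmap w1 (sg1 z) = (fun p => z (Some p))).

Definition qr0 := @piEnc R _ _ (e0 * e1)%N (fun p : 'I_k * 'I_n => p) (fun c => c %% e0)%N.
Definition qr1 := @piEnc R _ _ (e0 * e1)%N (fun p : 'I_k * 'I_n => p) (fun c => c %/ e0)%N.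
Definition JJ (z : option ('I_k * 'I_n) -> R) : vert L * 'I_n -> R :=
  ljoin (sg0 (qr0 z)) (sg1 (qr1 z)).
Definition sgm2 (z : option ('I_k * 'I_n) -> R) : vert L' * 'I_n -> R := gdown (JJ z).
Definition gam2 (phi : vert L' * 'I_n -> R) : option ('I_k * 'I_n) -> R :=
  fun o => match o with
           | Some p => vmap wg phi p
           | None => ga0 (lft (gup phi)) None + (e0%:R) * ga1 (rgt (gup phi)) None end.

Lemma qr0P z : P z -> P0 (qr0 z).
Proof.
move=> [[Hu0 _] [c Hc]]; split; first exact: Hu0.
have e0pos : (0 < e0)%N := pos_of_ord c.
exists (Ordinal (ltn_pmod c e0pos)); rewrite /qr0 /piEnc /= Hc dec_nat //.
Qed.

Lemma qr1P z : P z -> P1 (qr1 z).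
Proof.
move=> [[_ Hu1] [c Hc]]; split; first exact: Hu1.
have e0pos : (0 < e0)%N := pos_of_ord c.
have lt : (c %/ e0 < e1)%N by rewrite ltn_divLR // (mulnC e1 e0).
exists (Ordinal lt); rewrite /qr1 /piEnc /= Hc dec_nat //.
Qed.

Lemma JJv0 z : P z -> vmap w0 (sg0 (qr0 z)) = (fun p => z (Some p)).
Proof. by move=> Pz; exact: (Ie0 (qr0P Pz)). Qed.
Lemma JJv1 z : P z -> vmap w1 (sg1 (qr1 z)) = (fun p => z (Some p)).
Proof. by move=> Pz; exact: (Ie1 (qr1P Pz)). Qed.

Lemma JJc z : P z -> compat w0 w1 (JJ z).
Proof. by move=> Pz; apply: compat_join; rewrite JJv0 // JJv1. Qed.

Lemma sgm2_vmap z : P z -> vmap wg (sgm2 z) = (fun p => z (Some p)).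
Proof.
by move=> Pz; rewrite vmap_wg /sgm2 (up_down (JJc Pz)) /JJ lft_join JJv0.
Qed.

Lemma Bl2 phi : B phi -> B0 (lft (gup phi)).
Proof.
move=> [c [Hu0 _]]; split.
  exact: ((config_disj _).1 ((config_glue phi).1 c)).1.
by rewrite /preimage /= -vmap_wg.
Qed.

Lemma Br2 phi : B phi -> B1 (rgt (gup phi)).
Proof.
move=> [c [_ Hu1]]; split.
  exact: ((config_disj _).1 ((config_glue phi).1 c)).2.
by rewrite /preimage /= -vmap_wg1.
Qed.

Lemma sgm2P z : P z -> B (sgm2 z).
Proof.
move=> Pz; split.
  apply/config_glue; rewrite /sgm2 (up_down (JJc Pz)).
  by apply: config_join; [apply: (Ia0 (qr0P Pz)).1 | apply: (Ia1 (qr1P Pz)).1].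
by rewrite /preimage /= sgm2_vmap //; case: Pz.
Qed.

Lemma gam2P phi : B phi -> P (gam2 phi).
Proof.
move=> Bphi; split; first by case: Bphi.
have [_ [c0 h0]] := Ib0 (Bl2 Bphi); have [_ [c1 h1]] := Ib1 (Br2 Bphi).
exists (Ordinal (enc_lt (ltn_ord c0) (ltn_ord c1))).
by rewrite /gam2 h0 h1 /= natrD natrM.
Qed.

Lemma gam2_sgm2 z : P z -> gam2 (sgm2 z) = z.
Proof.
move=> Pz; apply: funext => -[p|].
  by rewrite /gam2 sgm2_vmap.
rewrite /gam2 /sgm2 (up_down (JJc Pz)) /JJ lft_join rgt_join (Ic0 (qr0P Pz)) (Ic1 (qr1P Pz)).
case: Pz => _ [c Hc]; rewrite /qr0 /qr1 /piEnc Hc dec_nat -natrM -natrD.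
by rewrite (mulnC e0 (c %/ e0)%N) addnC -divn_eq.
Qed.

Lemma sgm2_gam2 phi : B phi -> sgm2 (gam2 phi) = phi.
Proof.
move=> Bphi.
have [_ [c0 h0]] := Ib0 (Bl2 Bphi); have [_ [c1 h1]] := Ib1 (Br2 Bphi).
have Hg : gam2 phi None = (nat_of_ord (Ordinal (enc_lt (ltn_ord c0) (ltn_ord c1))))%:R.
  by rewrite /gam2 h0 h1 /= natrD natrM.
have e0pos : (0 < e0)%N by apply: (leq_ltn_trans (leq0n _) (ltn_ord c0)).
have Ey0 : (fun p => ga0 (lft (gup phi)) (Some p)) = vmap w0 (lft (gup phi)).
  by rewrite -(Ie0 (Ib0 (Bl2 Bphi))) (Id0 (Bl2 Bphi)).
have Ey1 : (fun p => ga1 (rgt (gup phi)) (Some p)) = vmap w1 (rgt (gup phi)).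
  by rewrite -(Ie1 (Ib1 (Br2 Bphi))) (Id1 (Br2 Bphi)).
have E0 : qr0 (gam2 phi) = ga0 (lft (gup phi)).
  apply: funext => -[p|].
    transitivity (vmap wg phi p); first by [].
    have /= E := congr1 (fun f => f p) Ey0.
    by rewrite vmap_wg E.
  rewrite /qr0 /piEnc Hg dec_nat h0 /=.
  have -> : ((c0 + e0 * c1) %% e0 = c0)%N.
    by rewrite addnC (mulnC e0 c1) modnMDl modn_small.
  by [].
have E1 : qr1 (gam2 phi) = ga1 (rgt (gup phi)).
  apply: funext => -[p|].
    transitivity (vmap wg phi p); first by [].
    have /= E := congr1 (fun f => f p) Ey1.
    by rewrite vmap_wg1 E.
  rewrite /qr1 /piEnc Hg dec_nat h1 /=.
  have -> : ((c0 + e0 * c1) %/ e0 = c1)%N.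
    by rewrite addnC (mulnC e0 c1) divnMDl // divn_small // addn0.
  by [].
by rewrite /sgm2 /JJ E0 E1 (Id0 (Bl2 Bphi)) (Id1 (Br2 Bphi)) join_lr down_up.
Qed.

Lemma PDz2 z : P z -> Dz (e0 * e1)%N z.
Proof. by move=> [_ [c Hc]]; exists c; rewrite Hc subrr normr0 invr_gt0. Qed.

Lemma cont_sgm2 : continuous_on P0 sg0 -> continuous_on P1 sg1 -> continuous_on P sgm2.
Proof.
move=> C0 C1; apply: cont_of_cont1 => -[X i]; rewrite /sgm2 /gdown /JJ /ljoin /=.
case: (grp X) => [x|y].
  apply: (cont1_comp (A := P0) (f := fun z => sg0 z (x, i)) (rho := qr0)).
  - exact: cont1_of_cont.
  - exact: cont_piE.
  - by move=> z Pz; apply: qr0P.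
apply: (cont1_comp (A := P1) (f := fun z => sg1 z (y, i)) (rho := qr1)).
- exact: cont1_of_cont.
- exact: cont_piE.
- by move=> z Pz; apply: qr1P.
Qed.

Definition lsel2 (p : vert L0 * 'I_n) : option (vert L' * 'I_n) :=
  Some (glue_proj w0 w1 (inl p.1), p.2).
Definition rsel2 (p : vert L1 * 'I_n) : option (vert L' * 'I_n) :=
  Some (glue_proj w0 w1 (inr p.1), p.2).

Lemma cont_gam2 : continuous_on B0 ga0 -> continuous_on B1 ga1 -> continuous_on B gam2.
Proof.
move=> C0 C1; apply: cont_of_cont1 => -[p|].
  by move=> a _ eps eps0; exists eps; split => // x _ bx; exact: (bx (wg p.1, p.2)).
apply: (cont1_ext (f := fun phi => 1 * ga0 (lft (gup phi)) None + e0%:R * ga1 (rgt (gup phi)) None)).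
  by move=> x; rewrite mul1r.
apply: cont1_lin.
  apply: (cont1_comp (A := B0) (f := fun z => ga0 z None) (rho := substv lsel2 (fun _ => 0))).
  - exact: cont1_of_cont.
  - exact: (@cont_subst R _ _ B lsel2 (fun _ => 0)).
  - by move=> z Bz; apply: Bl2.
apply: (cont1_comp (A := B1) (f := fun z => ga1 z None) (rho := substv rsel2 (fun _ => 0))).
- exact: cont1_of_cont.
- exact: (@cont_subst R _ _ B rsel2 (fun _ => 0)).
- by move=> z Bz; apply: Br2.
Qed.

Lemma ra_sgm2 : restr_analytic P0 sg0 -> restr_analytic P1 sg1 -> restr_analytic P sgm2.
Proof.
move=> [W0 [G0 [sW0 [[oW0 aG0] eG0]]]] [W1 [G1 [sW1 [[oW1 aG1] eG1]]]].
exists ((fun z => Dz (e0 * e1)%N z /\ W0 (qr0 z)) `&` (fun z => Dz (e0 * e1)%N z /\ W1 (qr1 z))).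
exists (fun z => gdown (ljoin (G0 (qr0 z)) (G1 (qr1 z)))).
split.
  move=> z Pz; split; split; try exact: PDz2.
    by apply: sW0; apply: qr0P.
  by apply: sW1; apply: qr1P.
split.
  split.
    by apply: open_setI; apply: open_locsubst => //; [exact: open_Dz | exact: locsubst_piE
      | exact: open_Dz | exact: locsubst_piE].
  move=> a [[Da W0a] [_ W1a]] [X i]; rewrite /gdown /ljoin /=.
  case: (grp X) => [x|y].
    apply: (analytic_locsubst (D := Dz (e0 * e1)%N) (rho := qr0) (F := fun z => G0 z (x, i))) => //.
      exact: locsubst_piE.
    exact: aG0.
  apply: (analytic_locsubst (D := Dz (e0 * e1)%N) (rho := qr1) (F := fun z => G1 z (y, i))) => //.
    exact: locsubst_piE.
  exact: aG1.
by move=> z Pz; rewrite /sgm2 /JJ (eG0 _ (qr0P Pz)) (eG1 _ (qr1P Pz)).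
Qed.

Lemma ra_gam2 : restr_analytic B0 ga0 -> restr_analytic B1 ga1 -> restr_analytic B gam2.
Proof.
move=> [W0 [G0 [sW0 [[oW0 aG0] eG0]]]] [W1 [G1 [sW1 [[oW1 aG1] eG1]]]].
exists ((fun phi => setT phi /\ W0 (substv lsel2 (fun _ => 0) phi)) `&`
        (fun phi => setT phi /\ W1 (substv rsel2 (fun _ => 0) phi))).
exists (fun phi o => match o with
        | Some p => phi (wg p.1, p.2)
        | None => G0 (lft (gup phi)) None + e0%:R * G1 (rgt (gup phi)) None end).
split.
  move=> phi Bphi; split; split => //.
    by apply: sW0; apply: Bl2.
  by apply: sW1; apply: Br2.
split.
  split.
    apply: open_setI; apply: open_locsubst => //; try exact: open_setT;
    exact: locsubst_subst.
  move=> a [[_ W0a] [_ W1a]] [p|].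
    exact: (analytic_coord (wg p.1, p.2) a).
  apply: (analytic_ext (f := fun phi => 1 * G0 (lft (gup phi)) None + e0%:R * G1 (rgt (gup phi)) None)).
    by move=> x; rewrite mul1r.
  apply: analytic_lin.
    apply: (analytic_locsubst (D := setT) (rho := substv lsel2 (fun _ => 0))
              (F := fun z => G0 z None)) => //; first exact: locsubst_subst.
    exact: aG0.
  apply: (analytic_locsubst (D := setT) (rho := substv rsel2 (fun _ => 0))
            (F := fun z => G1 z None)) => //; first exact: locsubst_subst.
  exact: aG1.
move=> phi Bphi; apply: funext => -[p|] //=.
by rewrite (eG0 _ (Bl2 Bphi)) (eG1 _ (Br2 Bphi)).
Qed.

End Part2F.

Lemma part2_func (R : realType) (n k m0 m1 : nat) (L0 L1 : lk_linkage R n)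
  (w0 : 'I_k -> vert L0) (v0 : 'I_m0 -> vert L0)
  (w1 : 'I_k -> vert L1) (v1 : 'I_m1 -> vert L1)
  (f0 : tup R k n -> tup R m0 n) (f1 : tup R k n -> tup R m1 n)
  (U0 : set (tup R k n)) (U1 : set (tup R k n)) :
  lk_functional w0 v0 f0 U0 -> lk_functional w1 v1 f1 U1 ->
  lk_functional (wg w0 w1) (@vg _ _ _ _ _ _ _ w0 v0 w1 v1) (lk_fpair f0 f1) (U0 `&` U1).
Proof.
move=> [Q0 [S0 [e0 [sg0 [[ga0 [Ia0 [Ib0 [Ic0 [Id0 [Ca0 [Cb0 [Aa0 Ab0]]]]]]]] Ie0]]]]].
move=> [Q1 [S1 [e1 [sg1 [[ga1 [Ia1 [Ib1 [Ic1 [Id1 [Ca1 [Cb1 [Aa1 Ab1]]]]]]]] Ie1]]]]].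
split; first exact: part2_quasi.
split; first exact: part2_dom.
exists (e0 * e1)%N, (sgm2 e0 e1 sg0 sg1).
split; last by move=> z Pz; eapply sgm2_vmap; eassumption.
exists (gam2 e0 ga0 ga1).
split; first by (move=> z Pz; eapply sgm2P; eassumption).
split; first by (move=> x Bx; eapply gam2P; eassumption).
split; first by (move=> z Pz; eapply gam2_sgm2; eassumption).
split; first by (move=> x Bx; eapply sgm2_gam2; eassumption).
split; first by (eapply cont_sgm2; eassumption).
split; first by (eapply cont_gam2; eassumption).
split; first by (eapply ra_sgm2; eassumption).
eapply ra_gam2; eassumption.
Qed.


Theorem lemma4p2 :
  (* (1) disjoint union *)
  (forall (R : realType) (n k0 k1 m0 m1 : nat) (L0 L1 : lk_linkage R n)
     (w0 : 'I_k0 -> vert L0) (v0 : 'I_m0 -> vert L0)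
     (w1 : 'I_k1 -> vert L1) (v1 : 'I_m1 -> vert L1)
     (f0 : tup R k0 n -> tup R m0 n) (f1 : tup R k1 n -> tup R m1 n)
     (U0 : set (tup R k0 n)) (U1 : set (tup R k1 n)),
     cabled_linkage L0 -> cabled_linkage L1 ->
     (lk_functional w0 v0 f0 U0 -> lk_functional w1 v1 f1 U1 ->
        lk_functional (lk_cat w0 w1) (lk_cat v0 v1) (lk_fprod f0 f1) (lk_dprod U0 U1)) /\
     (lk_strongly_functional w0 v0 f0 U0 -> lk_strongly_functional w1 v1 f1 U1 ->
        lk_strongly_functional (lk_cat w0 w1) (lk_cat v0 v1) (lk_fprod f0 f1) (lk_dprod U0 U1)))
  /\
  (* (2) identifying the j-th input vertices, k0 = k1 = k *)
  (forall (R : realType) (n k m0 m1 : nat) (L0 L1 : lk_linkage R n)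
     (w0 : 'I_k -> vert L0) (v0 : 'I_m0 -> vert L0)
     (w1 : 'I_k -> vert L1) (v1 : 'I_m1 -> vert L1)
     (f0 : tup R k n -> tup R m0 n) (f1 : tup R k n -> tup R m1 n)
     (U0 : set (tup R k n)) (U1 : set (tup R k n)),
     cabled_linkage L0 -> cabled_linkage L1 ->
     let L' := glue_linkage w0 w1 in
     let w' : 'I_k -> vert L' := fun j => glue_proj w0 w1 (inl (w0 j)) in
     let v' : 'I_(m0 + m1) -> vert L' := fun i => glue_proj w0 w1 (lk_cat v0 v1 i) in
     (lk_functional w0 v0 f0 U0 -> lk_functional w1 v1 f1 U1 ->
        lk_functional w' v' (lk_fpair f0 f1) (U0 `&` U1)) /\
     (lk_strongly_functional w0 v0 f0 U0 -> lk_strongly_functional w1 v1 f1 U1 ->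
        lk_strongly_functional w' v' (lk_fpair f0 f1) (U0 `&` U1))).
Proof.
split.
  move=> R n k0 k1 m0 m1 L0 L1 w0 v0 w1 v1 f0 f1 U0 U1 _ _; split.
    exact: part1_func.
  exact: part1_strong.
move=> R n k m0 m1 L0 L1 w0 v0 w1 v1 f0 f1 U0 U1 _ _ /=; split.
  exact: (@part2_func R n k m0 m1 L0 L1 w0 v0 w1 v1 f0 f1 U0 U1).
exact: (@part2_strong R n k m0 m1 L0 L1 w0 v0 w1 v1 f0 f1 U0 U1).
Qed.
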